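(* Let $m\ge2$ and let $\mathcal{H}_{2m}$ be as defined in the context. For generic $x_1,\ldots,x_{m-1},x_{m+1},\ldots,x_{2m-1},x$, the limit of $\mathcal{H}_{2m}(x_1,\ldots,x_{m-1},x,x_{m+1},\ldots,x_{2m-1},y)$ as $y\to x+\eta$ exists and equals \[ \prod_{i\in\{1,\ldots,m-1\}\cup\{m+1,\ldots,2m-1\}}\theta(x-\eta-x_i)\theta(x-\eta+x_i)\ \cdot\ \mathcal{H}_{2m-2}(x_1,\ldots,x_{m-1},x_{m+1},\ldots,x_{2m-1}), \] where in $\mathcal{H}_{2m-2}$ the first group of variables is $x_1,\ldots,x_{m-1}$ and the second group is $x_{m+1},\ldots,x_{2m-1}$.
   Context: Theta functions: for $|q|<1$, $\theta_1(x;q)=2\sum_{n\ge0}(-1)^nq^{(n+1/2)^2}\sin((2n+1)x)$. Fix $p=e^{i\pi\tau}$ with $\operatorname{Im}\tau>0$, write $\theta(x)=\theta_1(x;p)$, set $\eta=\pi/3$, and $h(x,y)=\theta(\eta+x-y)\theta(\eta+x+y)\theta(\eta-x-y)\theta(\eta-x+y)$. For $k\ge1$, \[ \mathcal{H}_{2k}(x_1,\ldots,x_{2k})=\frac{\prod_{i=1}^k\prod_{j=k+1}^{2k}h(x_i,x_j)}{\prod_{1\le i<j\le k}\theta(x_i-x_j)\theta(x_i+x_j)\prod_{k+1\le i<j\le 2k}\theta(x_i-x_j)\theta(x_i+x_j)}\ \det_{1\le i\le k,\ k+1\le j\le 2k}\frac{1}{h(x_i,x_j)}, \] the first group of variables being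 $x_1,\ldots,x_k$ and the second $x_{k+1},\ldots,x_{2k}$. *)

(* Defs.v *)
From Stdlib Require Import Reals Lra ClassicalEpsilon.
Open Scope R_scope.

Definition Cx : Type := (R * R)%type.
Definition Cre (z : Cx) : R := fst z.
Definition Cim (z : Cx) : R := snd z.
Definition RtoC (r : R) : Cx := (r, 0).
Definition C0 : Cx := (0, 0).
Definition C1 : Cx := (1, 0).
Definition Ci : Cx := (0, 1).
Definition Cadd (z w : Cx) : Cx := (fst z + fst w, snd z + snd w).
Definition Copp (z : Cx) : Cx := (- fst z, - snd z).
Definition Csub (z w : Cx) : Cx := Cadd z (Copp w).
Definition Cmul (z w : Cx) : Cx :=
  (fst z * fst w - snd z * snd w, fst z * snd w + snd z * fst w).
Definition Cinv (z : Cx) : Cx :=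
  (fst z / (fst z ^ 2 + snd z ^ 2), - snd z / (fst z ^ 2 + snd z ^ 2)).
Definition Cdiv (z w : Cx) : Cx := Cmul z (Cinv w).
Definition Cnorm (z : Cx) : R := sqrt (fst z ^ 2 + snd z ^ 2).
Definition Cexp (z : Cx) : Cx := (exp (fst z) * cos (snd z), exp (fst z) * sin (snd z)).
Definition Csin (z : Cx) : Cx :=
  Cmul (Csub (Cexp (Cmul Ci z)) (Cexp (Copp (Cmul Ci z)))) (0, - / 2).
(* sin z = (e^{iz} - e^{-iz}) / (2i) ; note 1/(2i) = -i/2 *)

Fixpoint Cprod (n : nat) (f : nat -> Cx) : Cx :=
  match n with O => C1 | S n' => Cmul (Cprod n' f) (f n') end.
Fixpoint Csum (n : nat) (f : nat -> Cx) : Cx :=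
  match n with O => C0 | S n' => Cadd (Csum n' f) (f n') end.

Definition Cseries_converges_to (f : nat -> Cx) (l : Cx) : Prop :=
  Un_cv (fun N => fst (Csum (S N) f)) (fst l) /\
  Un_cv (fun N => snd (Csum (S N) f)) (snd l).
Definition Cseries (f : nat -> Cx) : Cx :=
  epsilon (inhabits C0) (fun l => Cseries_converges_to f l).

(* q^{s} with q = p = e^{i pi tau} is read as exp(i pi tau s). *)
Definition ppow (tau : Cx) (s : R) : Cx := Cexp (Cmul Ci (Cmul (RtoC (PI * s)) tau)).

Definition theta (tau : Cx) (x : Cx) : Cx :=
  Cmul (RtoC 2)
    (Cseries (fun n => Cmul (RtoC ((-1) ^ n))
        (Cmul (ppow tau ((INR n + / 2) ^ 2))
              (Csin (Cmul (RtoC (2 * INR n + 1)) x))))).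

Definition eta : Cx := RtoC (PI / 3).

Definition hfun (tau : Cx) (x y : Cx) : Cx :=
  Cmul (Cmul (theta tau (Cadd eta (Csub x y))) (theta tau (Cadd eta (Cadd x y))))
       (Cmul (theta tau (Csub eta (Cadd x y))) (theta tau (Cadd (Csub eta x) y))).

Definition minor (M : nat -> nat -> Cx) (j : nat) : nat -> nat -> Cx :=
  fun r c => M (S r) (if Nat.ltb c j then c else S c).
Fixpoint Cdet (n : nat) (M : nat -> nat -> Cx) : Cx :=
  match n with
  | O => C1
  | S n' => Csum (S n') (fun j =>
      Cmul (RtoC ((-1) ^ j)) (Cmul (M O j) (Cdet n' (minor M j))))
  end.

(* first group of variables: u 0, ..., u (k-1); second group: v 0, ..., v (k-1) *)
Definition Hfun (tau : Cx) (k : nat) (u v : nat -> Cx) : Cx :=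
  let num := Cprod k (fun i => Cprod k (fun j => hfun tau (u i) (v j))) in
  let den1 := Cprod k (fun j => Cprod j (fun i =>
                 Cmul (theta tau (Csub (u i) (u j))) (theta tau (Cadd (u i) (u j))))) in
  let den2 := Cprod k (fun j => Cprod j (fun i =>
                 Cmul (theta tau (Csub (v i) (v j))) (theta tau (Cadd (v i) (v j))))) in
  Cmul (Cdiv num (Cmul den1 den2))
       (Cdet k (fun i j => Cinv (hfun tau (u i) (v j)))).

Definition Clim_at (f : Cx -> Cx) (z0 L : Cx) : Prop :=
  forall eps, 0 < eps -> exists delta, 0 < delta /\
    forall y, 0 < Cnorm (Csub y z0) < delta -> Cnorm (Csub (f y) L) < eps.

(* a point of Cx^{2n+1}: (a 0..a (n-1), b 0..b (n-1), x);
   "the ball of radius r around (a,b,x)" in the max norm *)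
Definition near (n : nat) (r : R) (a b : nat -> Cx) (x : Cx) (a' b' : nat -> Cx) (x' : Cx) : Prop :=
  Cnorm (Csub x' x) < r /\
  forall i, (i < n)%nat -> Cnorm (Csub (a' i) (a i)) < r /\ Cnorm (Csub (b' i) (b i)) < r.

(* G is an open dense subset of Cx^{2n+1} (coordinates with index >= n ignored) *)
Definition open_dense (n : nat) (G : (nat -> Cx) -> (nat -> Cx) -> Cx -> Prop) : Prop :=
  (forall a b x, G a b x -> exists r, 0 < r /\
      forall a' b' x', near n r a b x a' b' x' -> G a' b' x') /\
  (forall a b x r, 0 < r -> exists a' b' x', near n r a b x a' b' x' /\ G a' b' x').

Definition put_at (k : nat) (a : nat -> Cx) (z : Cx) : nat -> Cx :=
  fun i => if Nat.eqb i k then z else a i.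

(* Main.v *)
From Stdlib Require Import Reals Lra Lia ClassicalEpsilon FunctionalExtensionality Factorial Classical.
Require Import Defs.
From Coquelicot Require Import Coquelicot.
Open Scope R_scope.


Lemma CaddE : Cadd = Cplus. Proof. reflexivity. Qed.
Lemma CmulE : Cmul = Cmult. Proof. reflexivity. Qed.
Lemma CoppE : Defs.Copp = Complex.Copp. Proof. reflexivity. Qed.
Lemma CsubE : Csub = Cminus. Proof. reflexivity. Qed.
Lemma CinvE : Defs.Cinv = Complex.Cinv. Proof. reflexivity. Qed.
Lemma CdivE : Defs.Cdiv = Complex.Cdiv. Proof. reflexivity. Qed.
Lemma CnormE : Cnorm = Cmod. Proof. reflexivity. Qed.
Lemma C0E : C0 = RtoC 0. Proof. reflexivity. Qed.
Lemma C1E : C1 = RtoC 1. Proof. reflexivity. Qed.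
Lemma RtoCE : Defs.RtoC = Complex.RtoC. Proof. reflexivity. Qed.
Lemma CiE : Defs.Ci = Complex.Ci. Proof. reflexivity. Qed.
Ltac toC := try match goal with |- @eq _ ?a ?b => change (@eq C a b) end.
Ltac cnorm := rewrite ?CaddE, ?CmulE, ?CoppE, ?CsubE, ?CinvE, ?CdivE, ?CnormE, ?C0E, ?C1E, ?RtoCE, ?CiE in *.

Lemma sum_n_R (a : nat -> R) N : sum_n a N = sum_f_R0 a N.
Proof. apply sum_n_Reals. Qed.

Lemma rs_cv (a : nat -> R) (l : R) : is_series a l -> Un_cv (sum_f_R0 a) l.
Proof. intro H. apply is_series_Reals in H. exact H. Qed.
Lemma cv_rs (a : nat -> R) (l : R) : Un_cv (sum_f_R0 a) l -> is_series a l.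
Proof. intro H. apply is_series_Reals. exact H. Qed.

Lemma rs_plus (a b : nat -> R) (la lb : R) : is_series a la -> is_series b lb ->
  is_series (fun n => a n + b n) (la + lb).
Proof. intros. apply (@is_series_plus R_AbsRing R_NormedModule a b la lb); auto. Qed.
Lemma rs_scal (c : R) (a : nat -> R) (la : R) : is_series a la -> is_series (fun n => c * a n) (c * la).
Proof. intros. apply (@is_series_scal R_AbsRing R_NormedModule c a la); auto. Qed.
Lemma rs_opp (a : nat -> R) (la : R) : is_series a la -> is_series (fun n => - a n) (- la).
Proof. intros. apply (@is_series_opp R_AbsRing R_NormedModule a la); auto. Qed.
Lemma rs_ext (a b : nat -> R) (l : R) : (forall n, a n = b n) -> is_series a l -> is_series b l.
Proof. intros. eapply (@is_series_ext R_AbsRing R_NormedModule); eauto. Qed.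
Lemma rs_unique (a : nat -> R) (l l' : R) : is_series a l -> is_series a l' -> l = l'.
Proof. intros H1 H2. rewrite <- (is_series_unique _ _ H1). apply is_series_unique; auto. Qed.

Lemma rs_le (a b : nat -> R) (la lb : R) : is_series a la -> is_series b lb -> (forall n, a n <= b n) -> la <= lb.
Proof.
  intros Ha Hb H. apply rs_cv in Ha. apply rs_cv in Hb.
  apply (@Rle_cv_lim (sum_f_R0 a) (sum_f_R0 b) la lb); auto. intro n. apply sum_Rle. intros; auto.
Qed.

Lemma rs_ex_le (a b : nat -> R) : (forall n, Rabs (a n) <= b n) -> ex_series b -> ex_series a.
Proof. intros H Hb. apply (@ex_series_le R_AbsRing R_CompleteNormedModule a b); auto. Qed.

Lemma rs_nonneg (a : nat -> R) (la : R) : is_series a la -> (forall n, 0 <= a n) -> 0 <= la.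
Proof. intros. apply (rs_le (fun _ => 0) a 0 la); auto.
  apply cv_rs. intros e He. exists 0%nat. intros. rewrite sum_cte. unfold R_dist. 
  replace (0 * INR (S n) - 0) with 0 by ring. rewrite Rabs_R0; auto. Qed.



Lemma sum_f_R0_mono (a : nat -> R) n m : (forall k, 0 <= a k) -> (n <= m)%nat -> sum_f_R0 a n <= sum_f_R0 a m.
Proof.
  intros Hp H. induction H. lra. simpl. specialize (Hp (S m)). lra.
Qed.

Lemma rs_partial_le (a : nat -> R) (la : R) N : is_series a la -> (forall n, 0 <= a n) -> sum_f_R0 a N <= la.
Proof.
  intros H Hp. apply rs_cv in H.
  destruct (Rle_or_lt (sum_f_R0 a N) la) as [h|h]; auto.
  exfalso. destruct (H (sum_f_R0 a N - la)) as [M HM]. lra.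
  specialize (HM (max N M) (Nat.le_max_r _ _)). unfold R_dist in HM.
  pose proof (sum_f_R0_mono a N (max N M) Hp (Nat.le_max_l _ _)).
  rewrite Rabs_right in HM; lra.
Qed.

Lemma ex_is (a : nat -> R) : ex_series a -> is_series a (Series a).
Proof. intros. apply Series_correct. auto. Qed.


Lemma fst_le_Cmod (z : C) : Rabs (fst z) <= Cmod z.
Proof. pose proof (Rmax_Cmod z). pose proof (Rmax_l (Rabs (fst z)) (Rabs (snd z))). lra. Qed.
Lemma snd_le_Cmod (z : C) : Rabs (snd z) <= Cmod z.
Proof. pose proof (Rmax_Cmod z). pose proof (Rmax_r (Rabs (fst z)) (Rabs (snd z))). lra. Qed.
Lemma Cmod_le_2 (z : C) (B : R) : Rabs (fst z) <= B -> Rabs (snd z) <= B -> Cmod z <= 2 * B.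
Proof.
  intros H1 H2. pose proof (Cmod_2Rmax z).
  assert (Rmax (Rabs (fst z)) (Rabs (snd z)) <= B) by (apply Rmax_lub; auto).
  assert (sqrt 2 < 2). { pose proof (sqrt_sqrt 2 ltac:(lra)). pose proof (sqrt_pos 2). nra. }
  assert (0 <= Rmax (Rabs (fst z)) (Rabs (snd z))) by (eapply Rle_trans; [apply Rabs_pos| apply Rmax_l]).
  nra.
Qed.

Definition CSer (f : nat -> C) (l : C) : Prop :=
  is_series (fun n => fst (f n)) (fst l) /\ is_series (fun n => snd (f n)) (snd l).

Lemma Csum_fst f N : fst (Csum (S N) f) = sum_f_R0 (fun k => fst (f k)) N.
Proof. induction N. simpl. ring. 
  simpl. simpl in IHN. rewrite <- IHN. reflexivity. Qed.
Lemma Csum_snd f N : snd (Csum (S N) f) = sum_f_R0 (fun k => snd (f k)) N.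
Proof. induction N. simpl. ring. 
  simpl. simpl in IHN. rewrite <- IHN. reflexivity. Qed.

Lemma CSer_conv f l : CSer f l -> Cseries_converges_to f l.
Proof.
  intros [H1 H2]. split.
  - intros e He. destruct (rs_cv _ _ H1 e He) as [N HN]. exists N. intros n Hn.
    rewrite Csum_fst. apply HN; auto.
  - intros e He. destruct (rs_cv _ _ H2 e He) as [N HN]. exists N. intros n Hn.
    rewrite Csum_snd. apply HN; auto.
Qed.
Lemma conv_CSer f l : Cseries_converges_to f l -> CSer f l.
Proof.
  intros [H1 H2]. split; apply cv_rs.
  - intros e He. destruct (H1 e He) as [N HN]. exists N. intros n Hn.
    rewrite <- Csum_fst. apply HN; auto.
  - intros e He. destruct (H2 e He) as [N HN]. exists N. intros n Hn.
    rewrite <- Csum_snd. apply HN; auto.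
Qed.

Lemma CSer_unique f l l' : CSer f l -> CSer f l' -> l = l'.
Proof. intros [a b] [c d]. destruct l, l'. simpl in *.
  f_equal; eapply rs_unique; eauto. Qed.

Lemma CSer_Cseries f l : CSer f l -> Cseries f = l.
Proof.
  intros H. pose proof (epsilon_spec (inhabits C0) (fun l => Cseries_converges_to f l)) as E.
  unfold Cseries. apply (CSer_unique f). apply conv_CSer. apply E. exists l. apply CSer_conv; auto. auto.
Qed.

Lemma CSer_ex (f : nat -> C) (b : nat -> R) : (forall n, Cmod (f n) <= b n) -> ex_series b ->
  exists l, CSer f l.
Proof.
  intros H Hb.
  assert (E1 : ex_series (fun n => fst (f n))).
  { apply (rs_ex_le _ b); auto. intro n. eapply Rle_trans; [apply fst_le_Cmod|auto]. }
  assert (E2 : ex_series (fun n => snd (f n))).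
  { apply (rs_ex_le _ b); auto. intro n. eapply Rle_trans; [apply snd_le_Cmod|auto]. }
  exists (Series (fun n => fst (f n)), Series (fun n => snd (f n))). split; simpl; apply ex_is; auto.
Qed.

Lemma CSer_plus f g l l' : CSer f l -> CSer g l' -> CSer (fun n => (f n + g n)%C) (l + l')%C.
Proof. intros [a b] [c d]. split; simpl; apply rs_plus; auto. Qed.

Lemma CSer_scal (c : C) f l : CSer f l -> CSer (fun n => (c * f n)%C) (c * l)%C.
Proof. intros [a b]. split; simpl.
  - apply rs_plus. apply rs_scal; auto. apply rs_opp, rs_scal; auto.
  - apply rs_plus; apply rs_scal; auto.
Qed.

Lemma CSer_ext f g l : (forall n, f n = g n) -> CSer f l -> CSer g l.
Proof. intros H [a b]. split; eapply rs_ext; try eassumption; intro n; simpl; rewrite H; auto. Qed.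

Lemma CSer_zero : CSer (fun _ => 0%C) 0%C.
Proof. split; simpl; apply cv_rs; intros e He; exists 0%nat; intros n _; rewrite sum_cte;
  unfold R_dist; replace (0 * INR (S n) - 0) with 0 by ring; rewrite Rabs_R0; auto. Qed.



Lemma CSer_minus f g l l' : CSer f l -> CSer g l' -> CSer (fun n => (f n - g n)%C) (l - l')%C.
Proof. intros H1 H2.
  assert (H3 := CSer_scal (-1)%C g l' H2).
  replace (l - l')%C with (l + (-1) * l')%C by ring.
  eapply CSer_ext; [|apply (CSer_plus _ _ _ _ H1 H3)]. intro n; simpl. ring.
Qed.

Lemma CSer_bound f l (b : nat -> R) B : CSer f l -> (forall n, Cmod (f n) <= b n) -> is_series b B ->
  Cmod l <= 2 * B.
Proof.
  intros [H1 H2] Hb HB. apply Cmod_le_2; apply Rabs_le; split.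
  - apply rs_opp in HB. replace (- B) with (- B) by ring.
    eapply (rs_le (fun n => - b n) _ (-B)); eauto. intro n. pose proof (fst_le_Cmod (f n)). specialize (Hb n).
    apply Rabs_le_between in H. lra. 
  - eapply (rs_le _ b); eauto. intro n. pose proof (fst_le_Cmod (f n)). specialize (Hb n).
    apply Rabs_le_between in H. lra.
  - apply rs_opp in HB.
    eapply (rs_le (fun n => - b n) _ (-B)); eauto. intro n. pose proof (snd_le_Cmod (f n)). specialize (Hb n).
    apply Rabs_le_between in H. lra. 
  - eapply (rs_le _ b); eauto. intro n. pose proof (snd_le_Cmod (f n)). specialize (Hb n).
    apply Rabs_le_between in H. lra.
Qed.

Lemma CSer_Csum (K : nat) (f : nat -> nat -> C) (l : nat -> C) :
  (forall k, (k < K)%nat -> CSer (f k) (l k)) ->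
  CSer (fun n => Csum K (fun k => f k n)) (Csum K l).
Proof.
  induction K; intros H.
  - simpl. apply CSer_zero.
  - simpl. apply (CSer_plus (fun n => Csum K (fun k => f k n)) (f K)); auto.
Qed.

Lemma CSer_scal_r (c : C) f l : CSer f l -> CSer (fun n => (f n * c)%C) (l * c)%C.
Proof. intro H. replace (l * c)%C with (c * l)%C by (toC; ring). eapply CSer_ext; [|apply (CSer_scal c f l H)]. intro n. simpl. toC. ring. Qed.


Lemma Cexp_add u v : Cexp (u + v)%C = (Cexp u * Cexp v)%C.
Proof.
  destruct u as [a b], v as [c d]. unfold Cexp. simpl.
  rewrite exp_plus, cos_plus, sin_plus. unfold Cmult; simpl. f_equal; ring.
Qed.

Lemma Cexp_0 : Cexp (RtoC 0) = RtoC 1.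
Proof. unfold Cexp. simpl. rewrite exp_0, cos_0, sin_0. unfold RtoC. f_equal; ring. Qed.

Lemma Cmod_Cexp u : Cmod (Cexp u) = exp (fst u).
Proof.
  unfold Cexp, Cmod. cbn [fst snd].
  replace ((exp (fst u) * cos (snd u)) ^ 2 + (exp (fst u) * sin (snd u)) ^ 2)
    with ((exp (fst u))^2 * (sin (snd u) ^ 2 + cos (snd u) ^ 2)) by ring.
  rewrite <- !Rsqr_pow2. rewrite sin2_cos2, Rmult_1_r. apply sqrt_Rsqr. pose proof (exp_pos (fst u)); lra.
Qed.

Lemma Cexp_ne0 u : Cexp u <> (RtoC 0).
Proof. intro H. pose proof (Cmod_Cexp u). rewrite H, Cmod_0 in H0. pose proof (exp_pos (fst u)). lra. Qed.

Lemma Cexp_opp u : Cexp (- u)%C = (/ Cexp u)%C.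
Proof.
  assert (H : (Cexp (-u) * Cexp u = 1)%C). { rewrite <- Cexp_add. replace (-u+u)%C with (RtoC 0) by ring. apply Cexp_0. }
  pose proof (Cexp_ne0 u). replace (Cexp (-u)%C) with (Cexp (-u)%C * Cexp u / Cexp u)%C by (toC; field; auto).
  rewrite H. toC. field. auto.
Qed.

Lemma Cmod_Cexp_le u : Cmod (Cexp u) <= exp (Cmod u).
Proof. rewrite Cmod_Cexp. destruct (exp_increasing (fst u) (Cmod u)) as [] || idtac.
  destruct (Rle_lt_or_eq_dec (fst u) (Cmod u)) as [h|h].
  - pose proof (fst_le_Cmod u). pose proof (Rle_abs (fst u)). lra.
  - left. apply exp_increasing; auto.
  - rewrite h; lra.
Qed.

Lemma CsinE z : Csin z = ((Cexp (Ci * z) - Cexp (- (Ci * z))) * (0%R, (- / 2)%R))%C.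
Proof. reflexivity. Qed.

Lemma Cmod_half : Cmod (0%R, (-/2)%R) = /2.
Proof. unfold Cmod; cbn [fst snd]. replace (0^2 + (-/2)^2) with (Rsqr (/2)) by (unfold Rsqr; field).
  apply sqrt_Rsqr. lra. Qed.

Lemma Cmod_Ci : Cmod Ci = 1.
Proof. unfold Cmod, Ci; cbn [fst snd]. replace (0^2 + 1^2) with 1 by ring. apply sqrt_1. Qed.

Lemma Cmod_Csin_le z : Cmod (Csin z) <= exp (Cmod z).
Proof.
  rewrite CsinE, Cmod_mult, Cmod_half.
  assert (Cmod (Ci * z)%C = Cmod z). { rewrite Cmod_mult, Cmod_Ci. ring. }
  pose proof (Cmod_Cexp_le (Ci * z)%C). pose proof (Cmod_Cexp_le (- (Ci * z))%C).
  rewrite Cmod_opp in H1. rewrite H in *.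
  pose proof (Cmod_triangle (Cexp (Ci * z)%C) (- Cexp (- (Ci*z))%C)%C). rewrite Cmod_opp in H2.
  unfold Cminus. nra.
Qed.

Fixpoint cpw (u : C) (k : nat) : C := match k with O => (RtoC 1) | S k => (u * cpw u k)%C end.
Lemma Cmod_cpw u k : Cmod (cpw u k) = Cmod u ^ k.
Proof. induction k; simpl. apply Cmod_1. rewrite Cmod_mult, IHk. ring. Qed.
Lemma cpw_mul u v k : cpw (u * v)%C k = (cpw u k * cpw v k)%C.
Proof. induction k; simpl. ring. rewrite IHk. ring. Qed.

Definition ctay (u : C) (K : nat) : C := Csum (S K) (fun k => cpw u k * RtoC (/ INR (fact k)))%C.

Definition Et (u : C) (t : R) : C := (exp (t * fst u) * cos (t * snd u), exp (t * fst u) * sin (t * snd u)).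
Lemma Et_Cexp u t : Cexp (RtoC t * u)%C = Et u t.
Proof. unfold Cexp, Et. simpl. f_equal; f_equal; f_equal; ring. Qed.
Definition gv (u v : C) (t : R) : R := fst (v * Et u t)%C.

Lemma gv_derive u v t : is_derive (gv u v) t (gv u (v * u)%C t).
Proof.
  unfold gv, Et. simpl. destruct u as [a b], v as [c d]. simpl.
  auto_derive. auto. ring.
Qed.

Lemma gv_Derive_n u v k : Derive_n (gv u v) k = gv u (v * cpw u k)%C.
Proof.
  revert v. induction k; intro v.
  - simpl. apply functional_extensionality. intro t. unfold gv. f_equal. f_equal. ring.
  - simpl. rewrite IHk. apply functional_extensionality. intro t.
    rewrite (is_derive_unique _ _ _ (gv_derive u _ t)). unfold gv. f_equal. f_equal. ring.
Qed.

Lemma gv_ex_derive_n u v k t : ex_derive_n (gv u v) k t.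
Proof. destruct k. simpl; auto. simpl. rewrite gv_Derive_n. eexists. apply gv_derive. Qed.

Lemma sum_fst_ctay (v : C) u K :
  fst (v * ctay u K)%C = sum_f_R0 (fun m => fst (v * cpw u m)%C / INR (fact m)) K.
Proof.
  unfold ctay. induction K.
  - simpl. unfold Cmult, Cplus; simpl. field.
  - change (Csum (S (S K)) ?F) with (Cadd (Csum (S K) F) (F (S K))).
    change (sum_f_R0 ?G (S K)) with (sum_f_R0 G K + G (S K)).
    rewrite <- IHK. unfold Cadd, Cmult, RtoC; cbn [fst snd]. field. apply INR_fact_neq_0.
Qed.

Lemma fst_taylor (v u : C) K :
  Rabs (fst (v * Cexp u)%C - fst (v * ctay u K)%C) <= Cmod v * Cmod u ^ S K * exp (Cmod u) / INR (fact (S K)).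
Proof.
  destruct (Taylor_Lagrange (gv u v) K 0 1 Rlt_0_1) as [z [Hz E]].
  { intros. apply gv_ex_derive_n. }
  assert (E1 : gv u v 1 = fst (v * Cexp u)%C).
  { unfold gv. replace u with (RtoC 1 * u)%C at 2 by ring. rewrite Et_Cexp. auto. }
  rewrite E1 in E. rewrite E. rewrite sum_fst_ctay.
  replace (sum_f_R0 (fun m => (1 - 0) ^ m / INR (fact m) * Derive_n (gv u v) m 0) K)
    with (sum_f_R0 (fun m => fst (v * cpw u m)%C / INR (fact m)) K).
  2:{ apply sum_eq. intros i _. rewrite gv_Derive_n. unfold gv.
      replace (Et u 0) with (RtoC 1). 2:{ unfold Et. rewrite !Rmult_0_l, exp_0, cos_0, sin_0. unfold RtoC. f_equal; ring. }
      rewrite Cmult_1_r. replace (1-0) with 1 by ring. rewrite pow1. field. apply INR_fact_neq_0. }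
  match goal with |- Rabs (?s + ?r - ?s) <= _ => replace (s + r - s) with r by ring end.
  assert (HD : Rabs (gv u (v * cpw u (S K))%C z) <= Cmod v * Cmod u ^ S K * exp (Cmod u)).
  { unfold gv. eapply Rle_trans. apply fst_le_Cmod. rewrite !Cmod_mult, Cmod_cpw.
    apply Rmult_le_compat_l. apply Rmult_le_pos; [apply Cmod_ge_0|apply pow_le, Cmod_ge_0].
    rewrite <- Et_Cexp, Cmod_Cexp. 
    assert (fst (RtoC z * u)%C = z * fst u) by (unfold Cmult, RtoC; cbn [fst snd]; ring).
    rewrite H. pose proof (fst_le_Cmod u). pose proof (Rle_abs (fst u)).
    assert (Hz' : z * fst u <= Cmod u).
    { pose proof (Cmod_ge_0 u). destruct (Rle_dec 0 (fst u)).
      - assert (0 <= (1 - z) * fst u) by (apply Rmult_le_pos; lra). lra.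
      - assert (z * fst u <= 0) by (rewrite Rmult_comm; apply Rmult_le_0_r; lra). lra. }
    destruct (Rle_lt_or_eq_dec _ _ Hz') as [h|h].
    - left; apply exp_increasing; auto.
    - rewrite h; lra. }
  rewrite gv_Derive_n. replace (1-0) with 1 by ring. rewrite pow1.
  assert (HF : 0 < INR (fact (S K))) by (apply INR_fact_lt_0).
  replace (1 / INR (fact (S K)) * gv u (v * cpw u (S K))%C z) with (gv u (v * cpw u (S K))%C z / INR (fact (S K))) by (field; lra).
  unfold Rdiv. rewrite Rabs_mult, Rabs_inv, (Rabs_right (INR _)) by lra.
  apply Rmult_le_compat_r. left; apply Rinv_0_lt_compat; auto. auto.
Qed.

Lemma Cexp_taylor u K :
  Cmod (Cexp u - ctay u K)%C <= 4 * (Cmod u ^ S K * exp (Cmod u) / INR (fact (S K))).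
Proof.
  replace 4 with (2 * 2) by ring. rewrite Rmult_assoc. apply Cmod_le_2.
  - pose proof (fst_taylor (RtoC 1) u K). rewrite Cmod_1, !Cmult_1_l in H.
    replace (fst (Cexp u - ctay u K)%C) with (fst (Cexp u) - fst (ctay u K)) by (unfold Cminus, Cplus, Copp; simpl; ring).
    eapply Rle_trans; [apply H|]. assert (0 <= Cmod u ^ S K * exp (Cmod u) / INR (fact (S K))).
    { apply Rmult_le_pos. apply Rmult_le_pos. apply pow_le, Cmod_ge_0. left; apply exp_pos. left; apply Rinv_0_lt_compat, INR_fact_lt_0. }
    lra.
  - pose proof (fst_taylor (- Ci)%C u K). rewrite Cmod_opp, Cmod_Ci in H.
    replace (snd (Cexp u - ctay u K)%C) with (fst (- Ci * Cexp u)%C - fst (- Ci * ctay u K)%C) by (unfold Cminus, Cplus, Copp, Cmult, Ci; simpl; ring).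
    eapply Rle_trans; [apply H|]. assert (0 <= Cmod u ^ S K * exp (Cmod u) / INR (fact (S K))).
    { apply Rmult_le_pos. apply Rmult_le_pos. apply pow_le, Cmod_ge_0. left; apply exp_pos. left; apply Rinv_0_lt_compat, INR_fact_lt_0. }
    lra.
Qed.



Definition alpha (tau : C) : R := PI * snd tau.
Definition lam (n : nat) : R := 2 * INR n + 1.
Definition cc (tau : C) (n : nat) : C := (RtoC ((-1)^n) * ppow tau ((INR n + /2)^2))%C.
Definition bnd (tau : C) (rho : R) (n : nat) : R := exp (- alpha tau * (INR n + /2)^2 + lam n * rho).
Definition half : C := (0%R, (-/2)%R).

Lemma lam_pos n : 1 <= lam n.
Proof. unfold lam. pose proof (pos_INR n). lra. Qed.

Lemma Cmod_ppow tau s : Cmod (ppow tau s) = exp (- (PI * s * snd tau)).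
Proof. unfold ppow. rewrite Cmod_Cexp. f_equal. unfold Cmul, Defs.RtoC, Defs.Ci. cbn [fst snd]. ring. Qed.

Lemma Cmod_cc tau n : Cmod (cc tau n) = exp (- alpha tau * (INR n + /2)^2).
Proof. unfold cc. rewrite Cmod_mult, Cmod_R, pow_1_abs, Cmod_ppow, Rmult_1_l. unfold alpha. f_equal. ring. Qed.

Lemma exp_m_INR n : exp (- INR n) = exp (-1) ^ n.
Proof. induction n. simpl. rewrite Ropp_0, exp_0. auto.
  rewrite S_INR. simpl pow. rewrite <- IHn, <- exp_plus. f_equal. ring. Qed.

Lemma bnd_ex tau rho : 0 < snd tau -> ex_series (bnd tau rho).
Proof.
  intros Ht. assert (Ha : 0 < alpha tau) by (unfold alpha; pose proof PI_RGT_0; nra).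
  set (K := (2 * rho + 1)^2 / (4 * alpha tau)).
  assert (Hq : Rabs (exp (-1)) < 1).
  { rewrite Rabs_right by (left; apply exp_pos). rewrite <- exp_0. apply exp_increasing. lra. }
  apply (rs_ex_le _ (fun n => exp K * exp (-1) ^ n)).
  - intro n. rewrite Rabs_right by (left; apply exp_pos). unfold bnd.
    rewrite <- exp_m_INR, <- exp_plus. 
    destruct (Rle_lt_or_eq_dec (- alpha tau * (INR n + / 2) ^ 2 + lam n * rho) (K + - INR n)) as [h|h].
    + unfold K, lam. set (x := INR n).
      assert (E : K + - x - (- alpha tau * (x + /2)^2 + (2 * x + 1) * rho) = (2 * alpha tau * (x + /2) - (2*rho+1))^2 / (4 * alpha tau) + /2).
      { unfold K. field. lra. }
      assert (0 <= (2 * alpha tau * (x + /2) - (2*rho+1))^2 / (4 * alpha tau)).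
      { apply Rmult_le_pos. apply pow2_ge_0. left. apply Rinv_0_lt_compat. lra. }
      unfold K in E. lra.
    + left. apply exp_increasing; auto.
    + rewrite h. lra.
  - apply (@ex_series_scal R_AbsRing R_NormedModule). apply ex_series_geom. auto.
Qed.

Definition Aser (tau : C) (rho : R) : R := Series (bnd tau rho).
Lemma Aser_is tau rho : 0 < snd tau -> is_series (bnd tau rho) (Aser tau rho).
Proof. intro. apply ex_is. apply bnd_ex; auto. Qed.
Lemma bnd_pos tau rho n : 0 <= bnd tau rho n.
Proof. left; apply exp_pos. Qed.
Lemma Aser_pos tau rho : 0 < snd tau -> 0 <= Aser tau rho.
Proof. intro. eapply rs_nonneg. apply Aser_is; auto. apply bnd_pos. Qed.

Lemma Cmod_lam n (z : C) : Cmod (RtoC (lam n) * z)%C = lam n * Cmod z.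
Proof. rewrite Cmod_mult, Cmod_R, Rabs_right. auto. pose proof (lam_pos n); lra. Qed.

Definition term (tau z : Cx) (n : nat) : Cx :=
  Cmul (Defs.RtoC ((-1) ^ n)) (Cmul (ppow tau ((INR n + / 2) ^ 2)) (Csin (Cmul (Defs.RtoC (2 * INR n + 1)) z))).

Lemma term_eq tau z n : term tau z n = (cc tau n * Csin (RtoC (lam n) * z))%C.
Proof. unfold term, cc, lam. cnorm. toC. ring. Qed.

Lemma theta_eq tau z : theta tau z = (RtoC 2 * Cseries (term tau z))%C.
Proof. reflexivity. Qed.

Lemma cc_bnd tau n rho : Cmod (cc tau n) * exp (lam n * rho) = bnd tau rho n.
Proof. rewrite Cmod_cc. unfold bnd. rewrite <- exp_plus. auto. Qed.

Lemma term_bound tau z n : Cmod (term tau z n) <= bnd tau (Cmod z) n.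
Proof.
  rewrite term_eq, Cmod_mult, <- cc_bnd. apply Rmult_le_compat_l. apply Cmod_ge_0.
  rewrite <- Cmod_lam. apply Cmod_Csin_le.
Qed.

Lemma term_CSer tau z : 0 < snd tau -> CSer (term tau z) (Cseries (term tau z)).
Proof.
  intro Ht. destruct (CSer_ex (term tau z) (bnd tau (Cmod z))) as [l Hl].
  apply term_bound. apply bnd_ex; auto.
  rewrite (CSer_Cseries _ _ Hl). auto.
Qed.

(* derivative-like coefficients *)
Definition Sk (k : nat) (v : C) : C := ((cpw Ci k * Cexp (Ci * v)%C - cpw (- Ci)%C k * Cexp (- (Ci * v))%C) * half)%C.

Lemma Sk0 v : Sk 0 v = Csin v.
Proof. unfold Sk, half. rewrite CsinE. simpl cpw. toC. ring. Qed.

Lemma Cmod_Ci_mul (v : C) : Cmod (Ci * v)%C = Cmod v.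
Proof. rewrite Cmod_mult, Cmod_Ci. ring. Qed.

Lemma Cmod_Sk k v : Cmod (Sk k v) <= exp (Cmod v).
Proof.
  unfold Sk. rewrite Cmod_mult. unfold half. rewrite Cmod_half.
  pose proof (Cmod_triangle (cpw Ci k * Cexp (Ci * v)%C)%C (- (cpw (- Ci)%C k * Cexp (- (Ci * v))%C))%C).
  rewrite Cmod_opp, !Cmod_mult, !Cmod_cpw, Cmod_opp, Cmod_Ci, pow1, !Rmult_1_l in H.
  pose proof (Cmod_Cexp_le (Ci * v)%C). pose proof (Cmod_Cexp_le (- (Ci * v))%C).
  rewrite Cmod_opp, Cmod_Ci_mul in *. unfold Cminus. 
  pose proof (Cmod_ge_0 (cpw Ci k * Cexp (Ci * v)%C - cpw (- Ci)%C k * Cexp (- (Ci * v))%C)%C).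
  eapply Rle_trans; [apply Rmult_le_compat_r; [lra| exact H]|]. lra.
Qed.

Lemma pow_fact_le_exp x k : 0 <= x -> x ^ k / INR (fact k) <= exp x.
Proof.
  intro Hx. eapply Rle_trans; [|apply (exp_ge_taylor x k Hx)].
  destruct k. simpl. lra.
  change (sum_f_R0 ?f (S k)) with (sum_f_R0 f k + f (S k)). 
  assert (0 <= sum_f_R0 (fun k0 => x ^ k0 / INR (fact k0)) k).
  { apply cond_pos_sum. intro. apply Rmult_le_pos. apply pow_le; auto. left; apply Rinv_0_lt_compat, INR_fact_lt_0. }
  lra.
Qed.

Definition dterm (tau z0 : C) (k n : nat) : C := (cc tau n * cpw (RtoC (lam n)) k * Sk k (RtoC (lam n) * z0)%C)%C.
Definition Dk (tau z0 : C) (k : nat) : C := (RtoC 2 * Cseries (dterm tau z0 k))%C.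

Lemma dterm_bound tau z0 k n : Cmod (dterm tau z0 k n) <= INR (fact k) * bnd tau (1 + Cmod z0) n.
Proof.
  unfold dterm. rewrite !Cmod_mult, Cmod_cpw, Cmod_R, Rabs_right by (pose proof (lam_pos n); lra).
  rewrite <- cc_bnd. 
  pose proof (Cmod_Sk k (RtoC (lam n) * z0)%C). rewrite Cmod_lam in H.
  pose proof (pow_fact_le_exp (lam n) k ltac:(pose proof (lam_pos n); lra)).
  assert (HF : 0 < INR (fact k)) by apply INR_fact_lt_0.
  assert (lam n ^ k <= INR (fact k) * exp (lam n)).
  { unfold Rdiv in H0. apply (Rmult_le_compat_r (INR (fact k))) in H0; [|lra].
    rewrite Rmult_assoc, Rinv_l in H0 by lra. lra. }
  replace (lam n * (1 + Cmod z0)) with (lam n + lam n * Cmod z0) by ring. rewrite exp_plus.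
  pose proof (Cmod_ge_0 (cc tau n)). pose proof (Cmod_ge_0 (Sk k (RtoC (lam n) * z0)%C)).
  pose proof (pow_le (lam n) k ltac:(pose proof (lam_pos n); lra)).
  assert (Cmod (cc tau n) * lam n ^ k <= Cmod (cc tau n) * (INR (fact k) * exp (lam n))) by (apply Rmult_le_compat_l; auto).
  apply Rle_trans with (Cmod (cc tau n) * (INR (fact k) * exp (lam n)) * exp (lam n * Cmod z0)).
  - apply Rmult_le_compat; auto. apply Rmult_le_pos; auto.
  - right. ring.
Qed.

Lemma dterm_CSer tau z0 k : 0 < snd tau -> CSer (dterm tau z0 k) (Cseries (dterm tau z0 k)).
Proof.
  intro Ht. destruct (CSer_ex (dterm tau z0 k) (fun n => INR (fact k) * bnd tau (1 + Cmod z0) n)) as [l Hl].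
  apply dterm_bound. apply (@ex_series_scal R_AbsRing R_NormedModule). apply bnd_ex; auto.
  rewrite (CSer_Cseries _ _ Hl). auto.
Qed.


Lemma Csum_ext K f g : (forall k, (k < K)%nat -> f k = g k) -> Csum K f = Csum K g.
Proof. induction K; intros H; simpl; auto. rewrite IHK, H; auto. Qed.
Lemma Csum_scal_l K (c : C) f : Csum K (fun k => c * f k)%C = (c * Csum K f)%C.
Proof. induction K; simpl. cnorm. toC. ring. rewrite IHK. cnorm. toC. ring. Qed.
Lemma Csum_S K f : Csum (S K) f = (Csum K f + f K)%C.
Proof. reflexivity. Qed.

Lemma Sk_sum v x K :
  Csum (S K) (fun k => Sk k v * cpw x k * RtoC (/ INR (fact k)))%C =
  ((Cexp (Ci * v)%C * ctay (Ci * x)%C K - Cexp (- (Ci * v))%C * ctay (- (Ci * x))%C K) * half)%C.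
Proof.
  unfold ctay. induction K.
  - rewrite !Csum_S. change (Csum 0 ?f) with C0. unfold Sk. cbn [cpw]. cnorm. toC. ring.
  - rewrite (Csum_S (S K)), IHK, (Csum_S (S K) (fun k => cpw (Ci * x)%C k * _)%C), (Csum_S (S K) (fun k => cpw (- (Ci * x))%C k * _)%C).
    replace (- (Ci * x))%C with (- Ci * x)%C by (toC; ring).
    rewrite !cpw_mul. unfold Sk. toC. ring.
Qed.

Lemma rem_term v x K :
  Cmod (Csin (v + x)%C - Csum (S K) (fun k => Sk k v * cpw x k * RtoC (/ INR (fact k)))%C)%C
  <= 4 * exp (Cmod v) * (Cmod x ^ S K * exp (Cmod x) / INR (fact (S K))).
Proof.
  rewrite Sk_sum, CsinE.
  replace (Ci * (v + x))%C with (Ci * v + Ci * x)%C by (toC; ring).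
  replace (- (Ci * v + Ci * x))%C with (- (Ci * v) + - (Ci * x))%C by (toC; ring).
  rewrite !Cexp_add.
  set (X := Cmod x ^ S K * exp (Cmod x) / INR (fact (S K))).
  pose proof (Cexp_taylor (Ci * x)%C K) as T1. pose proof (Cexp_taylor (- (Ci * x))%C K) as T2.
  rewrite Cmod_opp, Cmod_Ci_mul in T2. rewrite Cmod_Ci_mul in T1. fold X in T1, T2.
  match goal with |- Cmod ?e <= _ => replace e with
    ((Cexp (Ci * v)%C * (Cexp (Ci * x)%C - ctay (Ci * x)%C K) - Cexp (- (Ci * v))%C * (Cexp (- (Ci * x))%C - ctay (- (Ci * x))%C K)) * half)%C
    by (unfold half; toC; ring) end.
  rewrite Cmod_mult. unfold half. rewrite Cmod_half.
  pose proof (Cmod_triangle (Cexp (Ci * v)%C * (Cexp (Ci * x)%C - ctay (Ci * x)%C K))%C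
                (- (Cexp (- (Ci * v))%C * (Cexp (- (Ci * x))%C - ctay (- (Ci * x))%C K)))%C) as TR.
  rewrite Cmod_opp, !Cmod_mult in TR.
  pose proof (Cmod_Cexp_le (Ci * v)%C) as E1. pose proof (Cmod_Cexp_le (- (Ci * v))%C) as E2.
  rewrite Cmod_opp, Cmod_Ci_mul in E2. rewrite Cmod_Ci_mul in E1.
  assert (HA : Cmod (Cexp (Ci * v)%C) * Cmod (Cexp (Ci * x)%C - ctay (Ci * x)%C K)%C <= exp (Cmod v) * (4 * X)).
  { apply Rmult_le_compat; auto; apply Cmod_ge_0. }
  assert (HB : Cmod (Cexp (- (Ci * v))%C) * Cmod (Cexp (- (Ci * x))%C - ctay (- (Ci * x))%C K)%C <= exp (Cmod v) * (4 * X)).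
  { apply Rmult_le_compat; auto; apply Cmod_ge_0. }
  unfold Cminus at 1.
  eapply Rle_trans; [apply Rmult_le_compat_r; [lra| exact TR]|]. lra.
Qed.

Definition Ptay (tau z0 w : C) (K : nat) : C :=
  Csum (S K) (fun k => Dk tau z0 k * (cpw w k * RtoC (/ INR (fact k))))%C.

Lemma Rem (tau z0 w : C) (K : nat) (M rho : R) : 0 < snd tau -> 0 <= M ->
  (forall n, 4 * exp (lam n * Cmod z0) * ((lam n * Cmod w) ^ S K * exp (lam n * Cmod w) / INR (fact (S K)))
             <= M * exp (lam n * rho)) ->
  Cmod (theta tau (z0 + w)%C - Ptay tau z0 w K)%C <= 4 * (M * Aser tau rho).
Proof.
  intros Ht HM HB.
  set (ck := fun k => (cpw w k * RtoC (/ INR (fact k)))%C).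
  set (Tn := fun n => Csum (S K) (fun k => Sk k (RtoC (lam n) * z0)%C * cpw (RtoC (lam n) * w)%C k * RtoC (/ INR (fact k)))%C).
  assert (S1 : CSer (fun n => Csum (S K) (fun k => dterm tau z0 k n * ck k)%C)
                    (Csum (S K) (fun k => Cseries (dterm tau z0 k) * ck k)%C)).
  { apply (CSer_Csum (S K) (fun k n => dterm tau z0 k n * ck k)%C). intros k _.
    apply CSer_scal_r, dterm_CSer; auto. }
  assert (S1' : CSer (fun n => cc tau n * Tn n)%C (Csum (S K) (fun k => Cseries (dterm tau z0 k) * ck k)%C)).
  { eapply CSer_ext; [|exact S1]. intro n. cbv beta. unfold Tn. rewrite <- Csum_scal_l.
    apply Csum_ext. intros k _. unfold dterm, ck. rewrite cpw_mul. toC. ring. }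
  pose proof (term_CSer tau (z0 + w)%C Ht) as S2.
  pose proof (CSer_minus _ _ _ _ S2 S1') as S3.
  assert (S4 : CSer (fun n => cc tau n * (Csin (RtoC (lam n) * z0 + RtoC (lam n) * w)%C - Tn n))%C
                   (Cseries (term tau (z0 + w)%C) - Csum (S K) (fun k => Cseries (dterm tau z0 k) * ck k))%C).
  { eapply CSer_ext; [|exact S3]. intro n. cbv beta. rewrite term_eq.
    replace (RtoC (lam n) * (z0 + w))%C with (RtoC (lam n) * z0 + RtoC (lam n) * w)%C by (toC; ring).
    toC. ring. }
  assert (HBn : forall n, Cmod (cc tau n * (Csin (RtoC (lam n) * z0 + RtoC (lam n) * w)%C - Tn n))%C <= M * bnd tau rho n).
  { intro n. rewrite Cmod_mult. unfold Tn.
    pose proof (rem_term (RtoC (lam n) * z0)%C (RtoC (lam n) * w)%C K) as R.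
    rewrite !Cmod_lam in R. rewrite <- cc_bnd.
    replace (M * (Cmod (cc tau n) * exp (lam n * rho))) with (Cmod (cc tau n) * (M * exp (lam n * rho))) by ring.
    apply Rmult_le_compat_l. apply Cmod_ge_0. eapply Rle_trans; [exact R|]. apply HB. }
  assert (HS : is_series (fun n => M * bnd tau rho n) (M * Aser tau rho)) by (apply rs_scal, Aser_is; auto).
  pose proof (CSer_bound _ _ _ _ S4 HBn HS) as HC.
  assert (E : (theta tau (z0 + w)%C - Ptay tau z0 w K)%C =
              (RtoC 2 * (Cseries (term tau (z0 + w)%C) - Csum (S K) (fun k => Cseries (dterm tau z0 k) * ck k)))%C).
  { rewrite theta_eq. unfold Ptay, Dk. 
    rewrite (Csum_ext (S K) _ (fun k => RtoC 2 * (Cseries (dterm tau z0 k) * ck k))%C).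
    rewrite Csum_scal_l. toC. ring. intros k _. unfold ck. toC. ring. }
  rewrite E, Cmod_mult, Cmod_R, Rabs_right by lra. lra.
Qed.


Lemma exp_le x y : x <= y -> exp x <= exp y.
Proof. intro H. destruct (Rle_lt_or_eq_dec _ _ H) as [h|h]. left; apply exp_increasing; auto. rewrite h; lra. Qed.

Lemma Dk0 tau z0 : Dk tau z0 0 = theta tau z0.
Proof.
  unfold Dk. rewrite theta_eq. f_equal. f_equal. apply functional_extensionality. intro n.
  unfold dterm. rewrite term_eq, Sk0. simpl cpw. toC. ring.
Qed.

Lemma Rem1 tau z0 w K : 0 < snd tau -> Cmod w <= 1 ->
  Cmod (theta tau (z0 + w)%C - Ptay tau z0 w K)%C <= 16 * (Cmod w ^ S K * Aser tau (Cmod z0 + 2)).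
Proof.
  intros Ht Hw. replace (16 * (Cmod w ^ S K * Aser tau (Cmod z0 + 2))) with (4 * ((4 * Cmod w ^ S K) * Aser tau (Cmod z0 + 2))) by ring.
  apply Rem; auto. pose proof (pow_le _ (S K) (Cmod_ge_0 w)). lra.
  intro n. pose proof (lam_pos n) as Hl. pose proof (Cmod_ge_0 w) as Hw0.
  rewrite Rpow_mult_distr.
  pose proof (pow_fact_le_exp (lam n) (S K) ltac:(lra)) as H1.
  assert (H2 : exp (lam n * Cmod w) <= exp (lam n)) by (apply exp_le; nra).
  replace (lam n * (Cmod z0 + 2)) with (lam n * Cmod z0 + lam n + lam n) by ring.
  rewrite !exp_plus.
  assert (HF : 0 < INR (fact (S K))) by apply INR_fact_lt_0.
  replace (lam n ^ S K * Cmod w ^ S K * exp (lam n * Cmod w) / INR (fact (S K)))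
    with (Cmod w ^ S K * (lam n ^ S K / INR (fact (S K))) * exp (lam n * Cmod w)) by (field; lra).
  pose proof (pow_le _ (S K) Hw0). pose proof (exp_pos (lam n * Cmod z0)). pose proof (exp_pos (lam n * Cmod w)).
  assert (0 <= lam n ^ S K / INR (fact (S K))) by (apply Rmult_le_pos; [apply pow_le; lra| left; apply Rinv_0_lt_compat; auto]).
  assert (Cmod w ^ S K * (lam n ^ S K / INR (fact (S K))) * exp (lam n * Cmod w) <= Cmod w ^ S K * exp (lam n) * exp (lam n)).
  { apply Rmult_le_compat; [apply Rmult_le_pos; auto | lra | apply Rmult_le_compat_l; auto | auto]. }
  assert (HX : 4 * exp (lam n * Cmod z0) * (Cmod w ^ S K * (lam n ^ S K / INR (fact (S K))) * exp (lam n * Cmod w))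
    <= 4 * exp (lam n * Cmod z0) * (Cmod w ^ S K * exp (lam n) * exp (lam n))).
  { apply Rmult_le_compat_l; auto. lra. }
  eapply Rle_trans; [exact HX|]. right. ring.
Qed.

Lemma Rem2 tau z0 w K : 0 < snd tau ->
  Cmod (theta tau (z0 + w)%C - Ptay tau z0 w K)%C <= 16 * ((/2) ^ S K * Aser tau (Cmod z0 + 3 * Cmod w)).
Proof.
  intros Ht. replace (16 * ((/2) ^ S K * Aser tau (Cmod z0 + 3 * Cmod w))) with (4 * ((4 * (/2) ^ S K) * Aser tau (Cmod z0 + 3 * Cmod w))) by ring.
  apply Rem; auto. pose proof (pow_le (/2) (S K) ltac:(lra)). lra.
  intro n. pose proof (lam_pos n) as Hl. pose proof (Cmod_ge_0 w) as Hw0.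
  pose proof (pow_fact_le_exp (2 * (lam n * Cmod w)) (S K) ltac:(nra)) as H1.
  rewrite Rpow_mult_distr in H1.
  replace (lam n * (Cmod z0 + 3 * Cmod w)) with (lam n * Cmod z0 + (2 * (lam n * Cmod w) + lam n * Cmod w)) by ring.
  rewrite !exp_plus.
  assert (HF : 0 < INR (fact (S K))) by apply INR_fact_lt_0.
  assert (E : (lam n * Cmod w) ^ S K / INR (fact (S K)) = (/2)^S K * (2 ^ S K * (lam n * Cmod w) ^ S K / INR (fact (S K)))).
  { assert (H22 : (/2)^S K * 2^S K = 1) by (rewrite <- Rpow_mult_distr; replace (/2*2) with 1 by field; apply pow1).
    unfold Rdiv. rewrite <- !Rmult_assoc, H22. ring. }
  replace ((lam n * Cmod w) ^ S K * exp (lam n * Cmod w) / INR (fact (S K))) with ((lam n * Cmod w) ^ S K / INR (fact (S K)) * exp (lam n * Cmod w)) by (field; lra).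
  rewrite E.
  pose proof (pow_le (/2) (S K) ltac:(lra)). pose proof (exp_pos (lam n * Cmod z0)). pose proof (exp_pos (lam n * Cmod w)).
  assert ((/ 2) ^ S K * (2 ^ S K * (lam n * Cmod w) ^ S K / INR (fact (S K))) <= (/2)^S K * exp (2 * (lam n * Cmod w))).
  { apply Rmult_le_compat_l; auto. }
  assert (HX : 4 * exp (lam n * Cmod z0) * ((/ 2) ^ S K * (2 ^ S K * (lam n * Cmod w) ^ S K / INR (fact (S K))) * exp (lam n * Cmod w))
     <= 4 * exp (lam n * Cmod z0) * ((/2)^S K * exp (2 * (lam n * Cmod w)) * exp (lam n * Cmod w))).
  { apply Rmult_le_compat_l. lra. apply Rmult_le_compat_r; lra. }
  eapply Rle_trans; [exact HX|]. right. ring.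
Qed.

Lemma Ptay0 tau z0 w : Ptay tau z0 w 0 = theta tau z0.
Proof. unfold Ptay. rewrite Csum_S. change (Csum 0 ?f) with C0. rewrite Dk0. simpl cpw. simpl fact.
  cnorm. replace (/ INR 1) with 1 by (simpl; field). toC. ring. Qed.

Lemma theta_lip tau z0 w : 0 < snd tau -> Cmod w <= 1 ->
  Cmod (theta tau (z0 + w)%C - theta tau z0)%C <= 16 * Aser tau (Cmod z0 + 2) * Cmod w.
Proof.
  intros Ht Hw. pose proof (Rem1 tau z0 w 0 Ht Hw). rewrite Ptay0 in H. simpl pow in H. 
  replace (Cmod w * 1) with (Cmod w) in H by ring. lra.
Qed.

Lemma theta_cont tau z0 : 0 < snd tau ->
  forall eps, 0 < eps -> exists d, 0 < d /\ forall z, Cmod (z - z0)%C < d -> Cmod (theta tau z - theta tau z0)%C < eps.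
Proof.
  intros Ht eps He. set (A := 16 * Aser tau (Cmod z0 + 2) + 1).
  assert (HA : 0 < A) by (unfold A; pose proof (Aser_pos tau (Cmod z0 + 2) Ht); lra).
  exists (Rmin 1 (eps / A)). split. apply Rmin_pos; [lra| apply Rdiv_lt_0_compat; auto].
  intros z Hz. replace z with (z0 + (z - z0))%C by (toC; ring).
  assert (H1 : Cmod (z - z0)%C <= 1) by (pose proof (Rmin_l 1 (eps/A)); lra).
  pose proof (theta_lip tau z0 (z - z0)%C Ht H1).
  assert (Cmod (z - z0)%C < eps / A) by (pose proof (Rmin_r 1 (eps/A)); lra).
  assert (A * Cmod (z - z0)%C < eps).
  { apply (Rmult_lt_compat_l A) in H0; auto. unfold Rdiv in H0. rewrite <- Rmult_assoc, (Rmult_comm A eps), Rmult_assoc, Rinv_r, Rmult_1_r in H0 by lra. auto. }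
  pose proof (Cmod_ge_0 (z - z0)%C).
  unfold A in H2. nra.
Qed.


Lemma min_ex (P : nat -> Prop) : (exists n, P n) -> exists n, P n /\ forall m, (m < n)%nat -> ~ P m.
Proof.
  intros [n Hn]. induction n as [n IH] using (well_founded_induction Wf_nat.lt_wf).
  destruct (classic (exists m, (m < n)%nat /\ P m)) as [[m [Hm Pm]]|H].
  - apply (IH m Hm Pm).
  - exists n. split; auto. intros m Hm Pm. apply H. exists m. auto.
Qed.

Lemma Csum_zero K : Csum K (fun _ => RtoC 0) = RtoC 0.
Proof. induction K; simpl. reflexivity. rewrite IHK. cnorm. toC. ring. Qed.

Lemma Ptay_first tau z0 w K : (forall k, (k < K)%nat -> Dk tau z0 k = RtoC 0) ->
  Ptay tau z0 w K = (Dk tau z0 K * (cpw w K * RtoC (/ INR (fact K))))%C.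
Proof.
  intro H. unfold Ptay. rewrite Csum_S.
  rewrite (Csum_ext K _ (fun _ => RtoC 0)). rewrite Csum_zero. cnorm. toC. ring.
  intros k Hk. rewrite H; auto. toC. ring.
Qed.

Lemma isolated_at tau z0 : 0 < snd tau -> (exists K, Dk tau z0 K <> RtoC 0) ->
  exists d, 0 < d /\ forall w, 0 < Cmod w < d -> theta tau (z0 + w)%C <> RtoC 0.
Proof.
  intros Ht HK. destruct (min_ex _ HK) as [K [HDK Hmin]].
  assert (Hz : forall k, (k < K)%nat -> Dk tau z0 k = RtoC 0).
  { intros k Hk. apply NNPP. intro. apply (Hmin k Hk); auto. }
  set (A := Aser tau (Cmod z0 + 2)). assert (HA : 0 <= A) by (apply Aser_pos; auto).
  set (D := Cmod (Dk tau z0 K)). assert (HD : 0 < D) by (apply Cmod_gt_0; auto).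
  set (F := INR (fact K)). assert (HF : 0 < F) by apply INR_fact_lt_0.
  exists (Rmin 1 (D / (F * (16 * A + 1)))). split.
  { apply Rmin_pos. lra. apply Rdiv_lt_0_compat; auto. apply Rmult_lt_0_compat; lra. }
  intros w [Hw0 Hw] E.
  assert (Hw1 : Cmod w <= 1) by (pose proof (Rmin_l 1 (D / (F * (16 * A + 1)))); lra).
  assert (Hw2 : Cmod w < D / (F * (16 * A + 1))) by (pose proof (Rmin_r 1 (D / (F * (16 * A + 1)))); lra).
  pose proof (Rem1 tau z0 w K Ht Hw1) as R. fold A in R.
  rewrite (Ptay_first tau z0 w K Hz), E in R.
  replace (RtoC 0 - Dk tau z0 K * (cpw w K * RtoC (/ INR (fact K))))%C
    with (- (Dk tau z0 K * (cpw w K * RtoC (/ INR (fact K)))))%C in R by (toC; ring).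
  rewrite Cmod_opp, !Cmod_mult, Cmod_cpw, Cmod_R, Rabs_right in R by (left; apply Rinv_0_lt_compat; auto).
  fold D F in R. simpl pow in R.
  assert (HwK : 0 < Cmod w ^ K) by (apply pow_lt; auto).
  assert (H16 : 16 * A * Cmod w * F < D).
  { apply Rlt_div_r in Hw2; [|apply Rmult_lt_0_compat; lra]. nra. }
  assert (D * (Cmod w ^ K * / F) * F = D * Cmod w ^ K) by (field; lra).
  assert (16 * (Cmod w * Cmod w ^ K * A) * F = (16 * A * Cmod w * F) * Cmod w ^ K) by ring.
  apply (Rmult_le_compat_r F) in R; [|lra]. nra.
Qed.

Lemma all_zero tau z0 : 0 < snd tau -> (forall K, Dk tau z0 K = RtoC 0) ->
  forall w, theta tau (z0 + w)%C = RtoC 0.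
Proof.
  intros Ht HK w. apply Cmod_eq_0. apply Rle_antisym; [|apply Cmod_ge_0].
  apply Rnot_lt_le. intro Hpos.
  set (A := Aser tau (Cmod z0 + 3 * Cmod w)). assert (HA : 0 <= A) by (apply Aser_pos; auto).
  destruct (pow_lt_1_zero (/2) ltac:(rewrite Rabs_right; lra) (Cmod (theta tau (z0 + w)%C) / (16 * A + 1)))
    as [N HN]. apply Rdiv_lt_0_compat; lra.
  specialize (HN (S N) ltac:(lia)). rewrite Rabs_right in HN by (left; apply pow_lt; lra).
  pose proof (Rem2 tau z0 w N Ht) as R. fold A in R.
  replace (Ptay tau z0 w N) with (RtoC 0) in R.
  2:{ unfold Ptay. rewrite (Csum_ext _ _ (fun _ => RtoC 0)). symmetry; apply Csum_zero.
      intros k _. rewrite HK. toC. ring. }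
  assert (E0 : (theta tau (z0 + w)%C - RtoC 0)%C = theta tau (z0 + w)%C).
  { change (@eq C (theta tau (z0 + w)%C - RtoC 0)%C (theta tau (z0 + w)%C)). ring. }
  rewrite E0 in R.
  set (T := Cmod (theta tau (z0 + w)%C)) in *.
  assert ((/2)^S N * (16 * A + 1) < T).
  { apply (Rmult_lt_compat_r (16 * A + 1)) in HN; [|lra]. unfold Rdiv in HN.
    rewrite Rmult_assoc, Rinv_l, Rmult_1_r in HN by lra. auto. }
  assert (0 < (/2)^S N) by (apply pow_lt; lra).
  nra.
Qed.


Fixpoint rsum (N : nat) (g : nat -> R) : R := match N with O => 0 | S N => rsum N g + g N end.

Lemma Csum_R N g : Csum N (fun j => RtoC (g j)) = RtoC (rsum N g).
Proof. induction N; simpl. reflexivity. rewrite IHN. unfold Cadd, RtoC; simpl. f_equal; ring. Qed.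

Lemma rsum_ext N f g : (forall j, (j < N)%nat -> f j = g j) -> rsum N f = rsum N g.
Proof. induction N; intros H; simpl; auto. rewrite IHN, H; auto. Qed.
Lemma rsum_minus N f g : rsum N (fun j => f j - g j) = rsum N f - rsum N g.
Proof. induction N; simpl. ring. rewrite IHN. ring. Qed.
Lemma rsum_scal N c f : rsum N (fun j => c * f j) = c * rsum N f.
Proof. induction N; simpl. ring. rewrite IHN. ring. Qed.
Lemma rsum_const N c : rsum N (fun _ => c) = INR N * c.
Proof. induction N; simpl rsum. simpl; ring. rewrite IHN, S_INR. ring. Qed.
Lemma rsum_abs N f : (forall j, Rabs (f j) <= 1) -> Rabs (rsum N f) <= INR N.
Proof. induction N; intros H; simpl rsum. simpl. rewrite Rabs_R0; lra.
  rewrite S_INR. eapply Rle_trans. apply Rabs_triang. specialize (IHN H). specialize (H N). lra. Qed.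

Lemma cos_tele N a : rsum N (fun j => cos (INR j * (2 * a))) * (2 * sin a) = sin ((2 * INR N - 1) * a) + sin a.
Proof.
  induction N; simpl rsum.
  - simpl. replace ((2 * 0 - 1) * a) with (- a) by ring. rewrite sin_neg. ring.
  - rewrite Rmult_plus_distr_r, IHN, S_INR.
    replace ((2 * (INR N + 1) - 1) * a) with (INR N * (2 * a) + a) by ring.
    replace ((2 * INR N - 1) * a) with (INR N * (2 * a) - a) by ring.
    rewrite sin_plus, sin_minus. ring.
Qed.

Lemma cos_sum_zero (N q : nat) : (0 < q)%nat -> (q < N)%nat ->
  rsum N (fun j => cos (INR j * (2 * (PI * INR q / INR N)))) = 0.
Proof.
  intros H1 H2. set (a := PI * INR q / INR N).
  assert (HN : 0 < INR N) by (apply lt_0_INR; lia).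
  assert (Ha : 0 < sin a).
  { apply sin_gt_0; unfold a.
    - apply Rdiv_lt_0_compat; auto. apply Rmult_lt_0_compat. apply PI_RGT_0. apply lt_0_INR; lia.
    - apply Rlt_div_l; auto. apply Rmult_lt_compat_l. apply PI_RGT_0. apply lt_INR; lia. }
  pose proof (cos_tele N a) as T.
  replace ((2 * INR N - 1) * a) with (- a + 2 * INR q * PI) in T by (unfold a; field; lra).
  rewrite sin_period, sin_neg in T.
  replace (- sin a + sin a) with 0 in T by ring.
  apply Rmult_integral in T. destruct T; auto. lra.
Qed.

Lemma sin_sin x y : sin x * sin y = / 2 * (cos (y - x) - cos (y + x)).
Proof. rewrite cos_minus, cos_plus. field. Qed.

Definition ee (N n : nat) : R := rsum N (fun j => sin (INR j * PI / INR N) * sin (lam n * (INR j * PI / INR N))).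

Lemma ee_split N n : (0 < N)%nat -> ee N n = / 2 * (rsum N (fun j => cos (INR j * (2 * (PI * INR n / INR N))))
                                            - rsum N (fun j => cos (INR j * (2 * (PI * INR (S n) / INR N))))).
Proof.
  intro HN. assert (0 < INR N) by (apply lt_0_INR; lia).
  unfold ee. rewrite <- rsum_minus, <- rsum_scal. apply rsum_ext. intros j _.
  rewrite sin_sin. unfold lam. rewrite S_INR. f_equal. f_equal; f_equal; field; lra.
Qed.

Lemma ee_0 N : (1 < N)%nat -> ee N 0 = INR N / 2.
Proof.
  intro HN. rewrite ee_split by lia. rewrite (cos_sum_zero N 1) by lia.
  rewrite (rsum_ext N _ (fun _ => 1)). rewrite rsum_const. field.
  intros j _. simpl INR. replace (INR j * (2 * (PI * 0 / INR N))) with 0. apply cos_0.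
  field. apply not_0_INR. lia.
Qed.

Lemma ee_mid N n : (1 <= n)%nat -> (n + 2 <= N)%nat -> ee N n = 0.
Proof.
  intros H1 H2. rewrite ee_split by lia. rewrite !cos_sum_zero by lia. ring.
Qed.

Lemma Rabs_sin_le x : Rabs (sin x) <= 1.
Proof. pose proof (SIN_bound x). apply Rabs_le. lra. Qed.

Lemma ee_bound N n : Rabs (ee N n) <= INR N.
Proof. apply rsum_abs. intro j. rewrite Rabs_mult. pose proof (Rabs_sin_le (INR j * PI / INR N)) as A. 
  pose proof (Rabs_sin_le (lam n * (INR j * PI / INR N))) as B. pose proof (Rabs_pos (sin (INR j * PI / INR N))).
  pose proof (Rabs_pos (sin (lam n * (INR j * PI / INR N)))). nra. Qed.


Lemma Csin_real x : Csin (RtoC x) = RtoC (sin x).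
Proof.
  rewrite CsinE.
  replace (Ci * RtoC x)%C with ((0, x) : C) by (unfold Ci, RtoC, Cmult; simpl; f_equal; ring).
  replace (- (0, x))%C with ((0, -x) : C) by (unfold Copp; simpl; f_equal; ring).
  unfold Cexp. cbn [fst snd]. rewrite exp_0, cos_neg, sin_neg.
  unfold RtoC, Cminus, Cplus, Copp, Cmult. cbn [fst snd]. f_equal; field.
Qed.

Lemma rs_shift (b : nat -> R) (A : R) M : is_series b A -> is_series (fun k => b (M + k)%nat) (A - rsum M b).
Proof.
  intro H. induction M.
  - simpl. replace (A - 0) with A by ring. eapply rs_ext; [|exact H]. auto.
  - assert (H2 := @is_series_incr_1 R_AbsRing R_NormedModule (fun k => b (M + k)%nat) (A - rsum (S M) b)).
    eapply rs_ext; [|apply H2]. intro n. simpl. f_equal. lia.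
    assert (E : A - rsum M b = (A - rsum (S M) b) + b (M + 0)%nat) by (simpl rsum; rewrite Nat.add_0_r; ring).
    rewrite E in IHM. exact IHM.
Qed.

Lemma fst_Csum M f : fst (Csum M f) = rsum M (fun n => fst (f n)).
Proof. induction M; simpl; auto. rewrite IHM. auto. Qed.
Lemma snd_Csum M f : snd (Csum M f) = rsum M (fun n => snd (f n)).
Proof. induction M; simpl; auto. rewrite IHM. auto. Qed.

Lemma CSer_shift f l M : CSer f l -> CSer (fun k => f (M + k)%nat) (l - Csum M f)%C.
Proof.
  intros [H1 H2]. split.
  - replace (fst (l - Csum M f)%C) with (fst l - rsum M (fun n => fst (f n))).
    apply (rs_shift (fun n => fst (f n))); auto.
    unfold Cminus, Cplus, Copp. cbn [fst]. rewrite fst_Csum. ring.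
  - replace (snd (l - Csum M f)%C) with (snd l - rsum M (fun n => snd (f n))).
    apply (rs_shift (fun n => snd (f n))); auto.
    unfold Cminus, Cplus, Copp. cbn [snd]. rewrite snd_Csum. ring.
Qed.

Lemma Csum_first M f : (1 <= M)%nat -> (forall n, (1 <= n)%nat -> (n < M)%nat -> f n = RtoC 0) -> Csum M f = f 0%nat.
Proof.
  intros HM H. induction M. lia. destruct M. simpl. cnorm. toC. ring.
  rewrite Csum_S, IHM. rewrite (H (S M)) by lia. toC. ring. lia. intros; apply H; lia.
Qed.

Lemma theta_not_zero_real tau : 0 < snd tau -> ~ (forall s, theta tau (RtoC s) = RtoC 0).
Proof.
  intros Ht H0.
  set (c0 := Cmod (cc tau 0)).
  assert (Hc0 : 0 < c0) by (unfold c0; rewrite Cmod_cc; apply exp_pos).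
  pose proof (Aser_is tau 0 Ht) as HA. set (A := Aser tau 0) in *.
  destruct (rs_cv _ _ HA (c0 / 8)) as [N0 HN0]. lra.
  set (M := S N0). set (N := S M).
  assert (HN : (1 < N)%nat) by (unfold N, M; lia).
  set (sj := fun j : nat => INR j * PI / INR N).
  assert (Z : forall j, Cseries (term tau (RtoC (sj j))) = RtoC 0).
  { intro j. specialize (H0 (sj j)). rewrite theta_eq in H0.
    apply (f_equal Cmod) in H0. rewrite Cmod_mult, Cmod_R, Cmod_0, Rabs_right in H0 by lra.
    apply Cmod_eq_0. lra. }
  assert (S1 : CSer (fun n => Csum N (fun j => RtoC (sin (sj j)) * term tau (RtoC (sj j)) n)%C)
                    (Csum N (fun j => RtoC (sin (sj j)) * Cseries (term tau (RtoC (sj j))))%C)).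
  { apply (CSer_Csum N (fun j n => RtoC (sin (sj j)) * term tau (RtoC (sj j)) n)%C). intros j _.
    apply CSer_scal, term_CSer; auto. }
  rewrite (Csum_ext N _ (fun _ => RtoC 0)) in S1. 2:{ intros; cbv beta; rewrite Z. apply Cmult_0_r. }
  rewrite Csum_zero in S1.
  set (f := fun n => (cc tau n * RtoC (ee N n))%C).
  assert (S2 : CSer f (RtoC 0)).
  { eapply CSer_ext; [|exact S1]. intro n. cbv beta. unfold f, ee.
    rewrite <- Csum_R, <- Csum_scal_l. apply Csum_ext. intros j _.
    rewrite term_eq. replace (RtoC (lam n) * RtoC (sj j))%C with (RtoC (lam n * sj j)) by (unfold RtoC, Cmult; simpl; f_equal; ring).
    rewrite Csin_real, RtoC_mult. unfold sj. toC. ring. }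
  pose proof (CSer_shift f (RtoC 0) M S2) as S3.
  rewrite Csum_first in S3.
  2: unfold M; lia.
  2:{ intros n Hn1 Hn2. unfold f. rewrite ee_mid by (unfold N; lia). toC. ring. }
  assert (HB : forall k, Cmod (f (M + k)%nat) <= INR N * bnd tau 0 (M + k)%nat).
  { intro k. unfold f. rewrite Cmod_mult, Cmod_R, <- (cc_bnd tau _ 0), Rmult_0_r, exp_0, Rmult_1_r.
    rewrite Rmult_comm. apply Rmult_le_compat_r. apply Cmod_ge_0. apply ee_bound. }
  assert (HS : is_series (fun k => INR N * bnd tau 0 (M + k)%nat) (INR N * (A - rsum M (bnd tau 0)))).
  { apply rs_scal. apply rs_shift. auto. }
  pose proof (CSer_bound _ _ _ _ S3 HB HS) as HC.
  replace (RtoC 0 - f 0%nat)%C with (- f 0%nat)%C in HC by (change (@eq C (- f 0%nat)%C (RtoC 0 - f 0%nat)%C); ring).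
  rewrite Cmod_opp in HC. unfold f in HC. rewrite Cmod_mult, Cmod_R, ee_0 in HC by auto. fold c0 in HC.
  assert (HT : A - rsum M (bnd tau 0) < c0 / 8).
  { specialize (HN0 N0 (le_n _)). unfold R_dist in HN0.
    replace (rsum M (bnd tau 0)) with (sum_f_R0 (bnd tau 0) N0) .
    apply Rabs_def2 in HN0. lra.
    unfold M. clear. induction N0. simpl. ring. simpl sum_f_R0. rewrite IHN0. simpl. auto. }
  assert (HNp : 0 < INR N) by (apply lt_0_INR; lia).
  rewrite Rabs_right in HC by (apply Rle_ge; apply Rmult_le_pos; lra).
  nra.
Qed.


Lemma theta_isolated tau z0 : 0 < snd tau ->
  exists d, 0 < d /\ forall w, 0 < Cmod w < d -> theta tau (z0 + w)%C <> RtoC 0.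
Proof.
  intro Ht. destruct (classic (exists K, Dk tau z0 K <> RtoC 0)) as [H|H].
  - apply isolated_at; auto.
  - exfalso. apply (theta_not_zero_real tau Ht). intro s.
    assert (HK : forall K, Dk tau z0 K = RtoC 0) by (intro K; apply NNPP; intro; apply H; exists K; auto).
    pose proof (all_zero tau z0 Ht HK (RtoC s - z0)%C).
    replace (z0 + (RtoC s - z0))%C with (RtoC s) in H0 by (toC; ring). auto.
Qed.

Lemma Csin_neg v : Csin (- v)%C = (- Csin v)%C.
Proof. rewrite !CsinE. replace (Ci * - v)%C with (- (Ci * v))%C by (toC; ring).
  replace (- - (Ci * v))%C with (Ci * v)%C by (toC; ring). toC. ring. Qed.

Lemma Cseries_scal (f g : nat -> C) (c : C) : (exists l, CSer g l) -> (forall n, f n = c * g n)%C ->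
  Cseries f = (c * Cseries g)%C.
Proof.
  intros [l Hl] H. rewrite (CSer_Cseries g l Hl). apply CSer_Cseries.
  eapply CSer_ext; [|apply (CSer_scal c g l Hl)]. intro n. auto.
Qed.

Lemma theta_odd tau z : 0 < snd tau -> theta tau (- z)%C = (- theta tau z)%C.
Proof.
  intro Ht. rewrite !theta_eq.
  rewrite (Cseries_scal (term tau (- z)%C) (term tau z) (RtoC (-1))).
  toC. ring. exists (Cseries (term tau z)). apply term_CSer; auto.
  intro n. rewrite !term_eq. replace (RtoC (lam n) * - z)%C with (- (RtoC (lam n) * z))%C by (toC; ring).
  rewrite Csin_neg. toC. ring.
Qed.

Lemma lamPI n : Cexp (Ci * (RtoC (lam n) * RtoC PI))%C = RtoC (-1) /\ Cexp (- (Ci * (RtoC (lam n) * RtoC PI)))%C = RtoC (-1).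
Proof.
  assert (E : lam n * PI = PI + 2 * INR n * PI) by (unfold lam; ring).
  split.
  - replace (Ci * (RtoC (lam n) * RtoC PI))%C with ((0, lam n * PI) : C) by (unfold Ci, RtoC, Cmult; simpl; f_equal; ring).
    unfold Cexp; cbn [fst snd]. rewrite exp_0, E, cos_period, sin_period, cos_PI, sin_PI. unfold RtoC. f_equal; ring.
  - replace (- (Ci * (RtoC (lam n) * RtoC PI)))%C with ((0, - (lam n * PI)) : C) by (unfold Ci, RtoC, Cmult, Copp; simpl; f_equal; ring).
    unfold Cexp; cbn [fst snd]. rewrite exp_0, cos_neg, sin_neg, E, cos_period, sin_period, cos_PI, sin_PI. unfold RtoC. f_equal; ring.
Qed.

Lemma theta_shift tau z : 0 < snd tau -> theta tau (z + RtoC PI)%C = (- theta tau z)%C.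
Proof.
  intro Ht. rewrite !theta_eq.
  rewrite (Cseries_scal (term tau (z + RtoC PI)%C) (term tau z) (RtoC (-1))).
  toC. ring. exists (Cseries (term tau z)). apply term_CSer; auto.
  intro n. rewrite !term_eq. destruct (lamPI n) as [E1 E2].
  rewrite !CsinE.
  replace (Ci * (RtoC (lam n) * (z + RtoC PI)))%C with (Ci * (RtoC (lam n) * z) + Ci * (RtoC (lam n) * RtoC PI))%C by (toC; ring).
  replace (- (Ci * (RtoC (lam n) * z) + Ci * (RtoC (lam n) * RtoC PI)))%C with (- (Ci * (RtoC (lam n) * z)) + - (Ci * (RtoC (lam n) * RtoC PI)))%C by (toC; ring).
  rewrite !Cexp_add, E1, E2. toC. ring.
Qed.

Lemma theta_0 tau : 0 < snd tau -> theta tau (RtoC 0) = RtoC 0.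
Proof.
  intro Ht. rewrite theta_eq.
  rewrite (CSer_Cseries (term tau (RtoC 0)) (RtoC 0)). toC. ring.
  eapply CSer_ext; [|apply CSer_zero]. intro n. rewrite term_eq.
  replace (RtoC (lam n) * RtoC 0)%C with (RtoC 0) by (toC; ring). rewrite Csin_real, sin_0. toC. ring.
Qed.


Definition Cc {T : Type} (N : R -> T -> Prop) (f : T -> C) (L : C) : Prop :=
  forall eps, 0 < eps -> exists d, 0 < d /\ forall t, N d t -> Cmod (f t - L)%C < eps.
Definition Nmono {T : Type} (N : R -> T -> Prop) : Prop := forall d1 d2 t, d1 <= d2 -> N d1 t -> N d2 t.

Section CC.
Context {T : Type} (N : R -> T -> Prop) (HN : Nmono N).

Lemma Cc_const c : Cc N (fun _ => c) c.
Proof. intros e He. exists 1. split. lra. intros. replace (c - c)%C with (RtoC 0) by (toC; ring). rewrite Cmod_0. auto. Qed.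

Lemma Cc_add f g L M : Cc N f L -> Cc N g M -> Cc N (fun t => f t + g t)%C (L + M)%C.
Proof.
  intros Hf Hg e He. destruct (Hf (e/2)) as [d1 [Hd1 H1]]. lra. destruct (Hg (e/2)) as [d2 [Hd2 H2]]. lra.
  exists (Rmin d1 d2). split. apply Rmin_pos; auto. intros t Ht.
  specialize (H1 t (HN _ _ _ (Rmin_l _ _) Ht)). specialize (H2 t (HN _ _ _ (Rmin_r _ _) Ht)).
  replace (f t + g t - (L + M))%C with ((f t - L) + (g t - M))%C by (toC; ring).
  pose proof (Cmod_triangle (f t - L)%C (g t - M)%C). lra.
Qed.

Lemma Cc_opp f L : Cc N f L -> Cc N (fun t => - f t)%C (- L)%C.
Proof.
  intros Hf e He. destruct (Hf e He) as [d [Hd H]]. exists d. split; auto. intros t Ht.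
  replace (- f t - - L)%C with (- (f t - L))%C by (toC; ring). rewrite Cmod_opp. auto.
Qed.

Lemma Cc_sub f g L M : Cc N f L -> Cc N g M -> Cc N (fun t => f t - g t)%C (L - M)%C.
Proof. intros. apply Cc_add; auto. apply Cc_opp; auto. Qed.

Lemma Cc_mul f g L M : Cc N f L -> Cc N g M -> Cc N (fun t => f t * g t)%C (L * M)%C.
Proof.
  intros Hf Hg e He.
  set (a := Cmod L + 1). set (b := Cmod M + 1).
  assert (Ha : 0 < a) by (unfold a; pose proof (Cmod_ge_0 L); lra).
  assert (Hb : 0 < b) by (unfold b; pose proof (Cmod_ge_0 M); lra).
  destruct (Hf (Rmin 1 (e / (2 * b)))) as [d1 [Hd1 H1]]. apply Rmin_pos. lra. apply Rdiv_lt_0_compat; lra.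
  destruct (Hg (Rmin 1 (e / (2 * a)))) as [d2 [Hd2 H2]]. apply Rmin_pos. lra. apply Rdiv_lt_0_compat; lra.
  exists (Rmin d1 d2). split. apply Rmin_pos; auto. intros t Ht.
  specialize (H1 t (HN _ _ _ (Rmin_l _ _) Ht)). specialize (H2 t (HN _ _ _ (Rmin_r _ _) Ht)).
  replace (f t * g t - L * M)%C with ((f t - L) * g t + L * (g t - M))%C by (toC; ring).
  pose proof (Cmod_triangle ((f t - L) * g t)%C (L * (g t - M))%C). rewrite !Cmod_mult in H.
  assert (Hg1 : Cmod (g t) <= b).
  { replace (g t) with ((g t - M) + M)%C by (toC; ring). pose proof (Cmod_triangle (g t - M)%C M).
    pose proof (Rmin_l 1 (e / (2 * a))). unfold b. lra. }
  assert (E1 : Cmod (f t - L)%C < e / (2 * b)) by (pose proof (Rmin_r 1 (e / (2 * b))); lra).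
  assert (E2 : Cmod (g t - M)%C < e / (2 * a)) by (pose proof (Rmin_r 1 (e / (2 * a))); lra).
  assert (T1 : Cmod (f t - L)%C * Cmod (g t) <= e / (2 * b) * b).
  { apply Rmult_le_compat; try apply Cmod_ge_0; lra. }
  assert (T2 : Cmod L * Cmod (g t - M)%C <= a * (e / (2 * a))).
  { apply Rmult_le_compat; try apply Cmod_ge_0. unfold a; lra. lra. }
  assert (e / (2 * b) * b = e / 2) by (field; lra).
  assert (a * (e / (2 * a)) = e / 2) by (field; lra).
  assert (Cmod (f t - L)%C * Cmod (g t) < e / 2 \/ Cmod L * Cmod (g t - M)%C < e / 2).
  { destruct (Req_dec (Cmod L) 0) as [h|h].
    - right. rewrite h. lra.
    - right. apply Rle_lt_trans with (Cmod L * (e / (2 * a))).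
      apply Rmult_le_compat_l. apply Cmod_ge_0. lra.
      apply Rlt_le_trans with (a * (e / (2 * a))). apply Rmult_lt_compat_r. apply Rdiv_lt_0_compat; lra.
      unfold a; lra. lra. }
  lra.
Qed.

Lemma Cc_inv f L : L <> RtoC 0 -> Cc N f L -> Cc N (fun t => / f t)%C (/ L)%C.
Proof.
  intros HL Hf e He.
  assert (Hl : 0 < Cmod L) by (apply Cmod_gt_0; auto).
  set (k := Rmin (Cmod L / 2) (e * (Cmod L * Cmod L) / 2)).
  assert (Hk : 0 < k) by (apply Rmin_pos; [lra| apply Rdiv_lt_0_compat; [apply Rmult_lt_0_compat; nra|lra]]).
  destruct (Hf k Hk) as [d [Hd H]]. exists d. split; auto. intros t Ht. specialize (H t Ht).
  assert (Hk1 : k <= Cmod L / 2) by apply Rmin_l.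
  assert (Hk2 : k <= e * (Cmod L * Cmod L) / 2) by apply Rmin_r.
  assert (H1 : Cmod (f t - L)%C < Cmod L / 2) by lra.
  assert (H2 : Cmod (f t - L)%C < e * (Cmod L * Cmod L) / 2) by lra.
  assert (Hft : Cmod L / 2 < Cmod (f t)).
  { assert (Cmod L <= Cmod (f t - L)%C + Cmod (f t)).
    { pose proof (Cmod_triangle (- (f t - L))%C (f t)). rewrite Cmod_opp in H0.
      replace (- (f t - L) + f t)%C with L in H0 by (toC; ring). auto. }
    lra. }
  assert (Hf0 : f t <> RtoC 0) by (intro E; rewrite E, Cmod_0 in Hft; lra).
  replace (/ f t - / L)%C with ((L - f t) / (f t * L))%C by (toC; field; auto).
  assert (HfL : (f t * L)%C <> RtoC 0).
  { intro E. apply (f_equal Cmod) in E. rewrite Cmod_mult, Cmod_0 in E. nra. }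
  rewrite Cmod_div, Cmod_mult by auto.
  replace (L - f t)%C with (- (f t - L))%C by (toC; ring). rewrite Cmod_opp.
  apply Rlt_div_l. apply Rmult_lt_0_compat; lra.
  assert (Cmod L / 2 * Cmod L <= Cmod (f t) * Cmod L) by (apply Rmult_le_compat_r; lra).
  nra.
Qed.

Lemma Cc_theta tau f L : 0 < snd tau -> Cc N f L -> Cc N (fun t => theta tau (f t)) (theta tau L).
Proof.
  intros Ht Hf e He. destruct (theta_cont tau L Ht e He) as [d1 [Hd1 H1]].
  destruct (Hf d1 Hd1) as [d [Hd H]]. exists d. split; [auto|]. intros t Ht'. apply H1. apply H; auto.
Qed.

Lemma Cc_Cprod k (F : T -> nat -> C) (L : nat -> C) :
  (forall i, (i < k)%nat -> Cc N (fun t => F t i) (L i)) -> Cc N (fun t => Cprod k (F t)) (Cprod k L).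
Proof.
  induction k; intros H.
  - simpl. apply Cc_const.
  - simpl. cnorm. apply (Cc_mul (fun t => Cprod k (F t)) (fun t => F t k)). apply IHk; auto. apply H; auto.
Qed.

Lemma Cc_Csum k (F : T -> nat -> C) (L : nat -> C) :
  (forall i, (i < k)%nat -> Cc N (fun t => F t i) (L i)) -> Cc N (fun t => Csum k (F t)) (Csum k L).
Proof.
  induction k; intros H.
  - simpl. apply Cc_const.
  - simpl. cnorm. apply (Cc_add (fun t => Csum k (F t)) (fun t => F t k)). apply IHk; auto. apply H; auto.
Qed.

Lemma Cc_Cdet k (M : T -> nat -> nat -> C) (L : nat -> nat -> C) :
  (forall i j, (i < k)%nat -> (j < k)%nat -> Cc N (fun t => M t i j) (L i j)) ->
  Cc N (fun t => Cdet k (M t)) (Cdet k L).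
Proof.
  revert M L. induction k; intros M L H.
  - simpl. apply Cc_const.
  - simpl. apply (Cc_Csum (S k) (fun t j => Cmul (Defs.RtoC ((-1)^j)) (Cmul (M t 0%nat j) (Cdet k (minor (M t) j))))).
    intros j Hj. cnorm. apply (Cc_mul (fun _ => RtoC ((-1)^j))). apply Cc_const.
    apply (Cc_mul (fun t => M t 0%nat j)). apply H; lia.
    apply (IHk (fun t => minor (M t) j) (minor L j)). intros i j' Hi Hj'. unfold minor.
    apply H. lia. destruct (Nat.ltb j' j); lia.
Qed.

Lemma Cc_ext f g L : (exists d0, 0 < d0 /\ forall t, N d0 t -> f t = g t) -> Cc N g L -> Cc N f L.
Proof.
  intros [d0 [Hd0 E]] Hg e He. destruct (Hg e He) as [d [Hd H]]. exists (Rmin d d0). split. apply Rmin_pos; auto.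
  intros t Ht. rewrite E. apply H. apply (HN _ _ _ (Rmin_l _ _) Ht). apply (HN _ _ _ (Rmin_r _ _) Ht).
Qed.
End CC.


Lemma Cprod_S k f : Cprod (S k) f = (Cprod k f * f k)%C.
Proof. reflexivity. Qed.
Lemma Cprod_ext k f g : (forall i, (i < k)%nat -> f i = g i) -> Cprod k f = Cprod k g.
Proof. induction k; intros H; simpl; auto. rewrite IHk, H; auto. Qed.
Lemma Cprod_mul k f g : Cprod k (fun i => f i * g i)%C = (Cprod k f * Cprod k g)%C.
Proof. induction k; simpl. cnorm. toC. ring. rewrite IHk. cnorm. toC. ring. Qed.
Lemma Cprod_nz k f : (forall i, (i < k)%nat -> f i <> RtoC 0) -> Cprod k f <> RtoC 0.
Proof.
  induction k; intros H.
  - simpl. intro E. injection E. lra.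
  - rewrite Cprod_S. intro E. apply (f_equal Cmod) in E. rewrite Cmod_mult, Cmod_0 in E.
    apply Rmult_integral in E. destruct E as [E|E]; apply Cmod_eq_0 in E.
    + apply IHk; auto.
    + apply (H k); auto.
Qed.
Lemma Cmul_nz (a b : C) : a <> RtoC 0 -> b <> RtoC 0 -> (a * b)%C <> RtoC 0.
Proof. intros Ha Hb E. apply (f_equal Cmod) in E. rewrite Cmod_mult, Cmod_0 in E.
  apply Rmult_integral in E. destruct E as [E|E]; apply Cmod_eq_0 in E; auto. Qed.
Lemma Cmul_nz_l (a b : C) : (a * b)%C <> RtoC 0 -> a <> RtoC 0.
Proof. intros H E. apply H. rewrite E. toC. ring. Qed.
Lemma Cmul_nz_r (a b : C) : (a * b)%C <> RtoC 0 -> b <> RtoC 0.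
Proof. intros H E. apply H. rewrite E. toC. ring. Qed.
Lemma Cprod_nz_inv k f i : Cprod k f <> RtoC 0 -> (i < k)%nat -> f i <> RtoC 0.
Proof.
  induction k; intros H Hi. lia. rewrite Cprod_S in H.
  destruct (Nat.eq_dec i k). subst. eapply Cmul_nz_r; eauto.
  apply IHk. eapply Cmul_nz_l; eauto. lia.
Qed.

Lemma Cinv_0' : (/ RtoC 0)%C = RtoC 0.
Proof. unfold Cinv, RtoC; cbn [fst snd]. replace (0 ^ 2 + 0 ^ 2) with 0 by ring. unfold Rdiv. rewrite Rinv_0. f_equal; ring. Qed.
Lemma Cinv_mul (a b : C) : (/ (a * b))%C = (/ a * / b)%C.
Proof.
  destruct (classic (a = RtoC 0)) as [Ha|Ha]. subst. replace (RtoC 0 * b)%C with (RtoC 0) by (toC; ring).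
  rewrite Cinv_0'. toC. ring.
  destruct (classic (b = RtoC 0)) as [Hb|Hb]. subst. replace (a * RtoC 0)%C with (RtoC 0) by (toC; ring).
  rewrite Cinv_0'. toC. ring.
  toC. field. auto.
Qed.

Lemma Cdet_S n M : Cdet (S n) M = Csum (S n) (fun j => RtoC ((-1)^j) * (M 0%nat j * Cdet n (minor M j)))%C.
Proof. reflexivity. Qed.

Lemma Cdet_ext k M M' : (forall i j, (i < k)%nat -> (j < k)%nat -> M i j = M' i j) -> Cdet k M = Cdet k M'.
Proof.
  revert M M'. induction k; intros M M' H. reflexivity.
  rewrite !Cdet_S. apply Csum_ext. intros j Hj. rewrite H by lia. f_equal. f_equal.
  apply IHk. intros i j' Hi Hj'. unfold minor. apply H. lia. destruct (Nat.ltb j' j); lia.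
Qed.

Lemma Csum_plus k f g : Csum k (fun j => f j + g j)%C = (Csum k f + Csum k g)%C.
Proof. induction k; simpl. cnorm; toC; ring. rewrite IHk. cnorm. toC. ring. Qed.

Definition upd (n : nat) (M : nat -> nat -> C) : nat -> nat -> C :=
  fun i j => if andb (Nat.eqb i n) (Nat.eqb j n) then RtoC 0 else M i j.

Lemma Cdet_last n M : Cdet (S n) M = (Cdet (S n) (upd n M) + M n n * Cdet n M)%C.
Proof.
  revert M. induction n; intro M.
  - rewrite !Cdet_S. simpl. unfold upd. simpl. cnorm. toC. ring.
  - rewrite (Cdet_S (S n) M), (Cdet_S (S n) (upd (S n) M)).
    rewrite (Csum_S (S n) (fun j => RtoC ((-1)^j) * (M 0%nat j * Cdet (S n) (minor M j)))%C).
    rewrite (Csum_S (S n) (fun j => RtoC ((-1)^j) * (upd (S n) M 0%nat j * Cdet (S n) (minor (upd (S n) M) j)))%C).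
    assert (E1 : minor M (S n) = minor (upd (S n) M) (S n)).
    { apply functional_extensionality; intro r; apply functional_extensionality; intro c.
      unfold minor, upd. destruct (Nat.ltb c (S n)) eqn:Hc.
      - apply Nat.ltb_lt in Hc. destruct (Nat.eqb (S r) (S n) && Nat.eqb c (S n))%bool eqn:E; auto.
        apply Bool.andb_true_iff in E. destruct E as [_ E]. apply Nat.eqb_eq in E. lia.
      - destruct (Nat.eqb (S r) (S n) && Nat.eqb (S c) (S n))%bool eqn:E; auto.
        apply Bool.andb_true_iff in E. destruct E as [_ E]. apply Nat.eqb_eq in E. apply Nat.ltb_ge in Hc. lia. }
    assert (E0 : forall j, upd (S n) M 0%nat j = M 0%nat j) by (intro j; unfold upd; simpl; auto).
    rewrite E0, <- E1.
    rewrite (Csum_ext (S n) (fun j => RtoC ((-1)^j) * (M 0%nat j * Cdet (S n) (minor M j)))%C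
       (fun j => RtoC ((-1)^j) * (upd (S n) M 0%nat j * Cdet (S n) (minor (upd (S n) M) j))
                 + M (S n) (S n) * (RtoC ((-1)^j) * (M 0%nat j * Cdet n (minor M j))))%C).
    2:{ intros j Hj. rewrite IHn, E0.
        assert (E2 : upd n (minor M j) = minor (upd (S n) M) j).
        { apply functional_extensionality; intro r; apply functional_extensionality; intro c.
          unfold minor, upd. destruct (Nat.ltb c j) eqn:Hc.
          - apply Nat.ltb_lt in Hc.
            replace (Nat.eqb c n) with false by (symmetry; apply Nat.eqb_neq; lia).
            replace (Nat.eqb c (S n)) with false by (symmetry; apply Nat.eqb_neq; lia).
            rewrite !Bool.andb_false_r. auto.
          - apply Nat.ltb_ge in Hc. simpl Nat.eqb. auto. }
        assert (E3 : minor M j n n = M (S n) (S n)).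
        { unfold minor. replace (Nat.ltb n j) with false by (symmetry; apply Nat.ltb_ge; lia). auto. }
        rewrite E2, E3. toC. ring. }
    rewrite Csum_plus, Csum_scal_l, <- Cdet_S. toC. ring.
Qed.


Lemma eta3 : RtoC PI = (eta + eta + eta)%C.
Proof. unfold eta, Defs.RtoC, RtoC, Cplus. cbn [fst snd]. f_equal; field. Qed.

Lemma theta_shift3 tau z : 0 < snd tau -> theta tau (z + (eta + eta + eta))%C = (- theta tau z)%C.
Proof. intro. rewrite <- eta3. apply theta_shift; auto. Qed.

Lemma theta_arg tau z w : z = w -> theta tau z = theta tau w.
Proof. intros; subst; auto. Qed.

Lemma hfunE tau x y : hfun tau x y =
  (theta tau (eta + (x - y)) * theta tau (eta + (x + y)) * (theta tau (eta - (x + y)) * theta tau (eta - x + y)))%C.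
Proof. reflexivity. Qed.

Lemma h_ay0 tau a x : 0 < snd tau -> hfun tau a (x + eta)%C =
  (- (theta tau (a - x) * theta tau (a + x) * theta tau (x - eta + a) * theta tau (x - eta - a)))%C.
Proof.
  intro Ht. rewrite hfunE.
  rewrite (theta_arg tau (eta + (a - (x + eta)))%C (a - x)%C) by (toC; ring).
  rewrite (theta_arg tau (eta + (a + (x + eta)))%C ((x - eta + a) + (eta + eta + eta))%C) by (toC; ring).
  rewrite (theta_arg tau (eta - (a + (x + eta)))%C (- (a + x))%C) by (toC; ring).
  rewrite (theta_arg tau (eta - a + (x + eta))%C ((x - eta - a) + (eta + eta + eta))%C) by (toC; ring).
  rewrite !theta_shift3, theta_odd by auto. toC. ring.
Qed.

Lemma h_xb tau x b : 0 < snd tau -> hfun tau x b =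
  (- (theta tau (b - (x + eta)) * theta tau (b + (x + eta)) * theta tau (x - eta + b) * theta tau (x - eta - b)))%C.
Proof.
  intro Ht. rewrite hfunE.
  rewrite (theta_arg tau (eta + (x - b))%C (- (b - (x + eta)))%C) by (toC; ring).
  rewrite (theta_arg tau (eta + (x + b))%C (b + (x + eta))%C) by (toC; ring).
  rewrite (theta_arg tau (eta - (x + b))%C (- (x - eta + b))%C) by (toC; ring).
  rewrite (theta_arg tau (eta - x + b)%C (- (x - eta - b))%C) by (toC; ring).
  rewrite !theta_odd by auto. toC. ring.
Qed.

Lemma h_zero tau x : 0 < snd tau -> hfun tau x (x + eta)%C = RtoC 0.
Proof.
  intro Ht. rewrite hfunE. rewrite (theta_arg tau (eta + (x - (x + eta)))%C (RtoC 0)) by (toC; ring).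
  rewrite theta_0 by auto. toC. ring.
Qed.


Definition NumF tau k (u v : nat -> C) : C := Cprod k (fun i => Cprod k (fun j => hfun tau (u i) (v j))).
Definition DenF tau k (u : nat -> C) : C :=
  Cprod k (fun j => Cprod j (fun i => (theta tau (u i - u j) * theta tau (u i + u j))%C)).
Definition DetF tau k (u v : nat -> C) : C := Cdet k (fun i j => Defs.Cinv (hfun tau (u i) (v j))).

Lemma Hfun_eq tau k u v : Hfun tau k u v = (NumF tau k u v * / (DenF tau k u * DenF tau k v) * DetF tau k u v)%C.
Proof. reflexivity. Qed.

Lemma put_lt n a x i : (i < n)%nat -> put_at n a x i = a i.
Proof. intro H. unfold put_at. replace (Nat.eqb i n) with false by (symmetry; apply Nat.eqb_neq; lia). auto. Qed.
Lemma put_n n a x : put_at n a x n = x.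
Proof. unfold put_at. rewrite Nat.eqb_refl. auto. Qed.

Lemma NumF_split tau n a b x y :
  NumF tau (S n) (put_at n a x) (put_at n b y) =
  (NumF tau n a b * Cprod n (fun i => hfun tau (a i) y) * Cprod n (fun j => hfun tau x (b j)) * hfun tau x y)%C.
Proof.
  unfold NumF. rewrite Cprod_S.
  rewrite (Cprod_ext n _ (fun i => Cprod n (fun j => hfun tau (a i) (b j)) * hfun tau (a i) y)%C).
  2:{ intros i Hi. rewrite Cprod_S, put_lt, put_n by auto. f_equal. apply Cprod_ext. intros j Hj. rewrite !put_lt; auto. }
  rewrite Cprod_mul, Cprod_S, put_n, put_n.
  rewrite (Cprod_ext n (fun j => hfun tau x (put_at n b y j)) (fun j => hfun tau x (b j))).
  2:{ intros j Hj. rewrite put_lt; auto. }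
  toC. ring.
Qed.

Lemma DenF_split tau n a x :
  DenF tau (S n) (put_at n a x) = (DenF tau n a * Cprod n (fun i => theta tau (a i - x) * theta tau (a i + x))%C)%C.
Proof.
  unfold DenF. rewrite Cprod_S. f_equal.
  - apply Cprod_ext. intros j Hj. apply Cprod_ext. intros i Hi. rewrite !put_lt by lia. auto.
  - apply Cprod_ext. intros i Hi. rewrite put_lt, put_n by lia. auto.
Qed.

Definition Mu tau n a b x y : nat -> nat -> C := fun i j => Defs.Cinv (hfun tau (put_at n a x i) (put_at n b y j)).

Lemma DetF_split tau n a b x y :
  DetF tau (S n) (put_at n a x) (put_at n b y) =
  (Cdet (S n) (upd n (Mu tau n a b x y)) + / hfun tau x y * DetF tau n a b)%C.
Proof.
  unfold DetF. fold (Mu tau n a b x y). rewrite Cdet_last. f_equal. f_equal.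
  unfold Mu. rewrite !put_n. auto.
  apply Cdet_ext. intros i j Hi Hj. unfold Mu. rewrite !put_lt; auto.
Qed.

Lemma alg1 (A D h R Det : C) : h <> RtoC 0 ->
  ((A * h) * D * (R + / h * Det))%C = (A * D * Det + h * (A * D * R))%C.
Proof. intro H. toC. field. auto. Qed.


Definition NZ (f : C -> C) : Prop := exists d, 0 < d /\ forall s, 0 < Cmod s < d -> f s <> RtoC 0.

Lemma NZ_mul f g : NZ f -> NZ g -> NZ (fun s => f s * g s)%C.
Proof.
  intros [d1 [H1 F]] [d2 [H2 G]]. exists (Rmin d1 d2). split. apply Rmin_pos; auto.
  intros s Hs. pose proof (Rmin_l d1 d2). pose proof (Rmin_r d1 d2).
  apply Cmul_nz. apply F; lra. apply G; lra.
Qed.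

Lemma NZ_ext f g : (forall s, f s = g s) -> NZ g -> NZ f.
Proof. intros E [d [Hd H]]. exists d. split; auto. intros. rewrite E. auto. Qed.

Lemma NZ_Cprod k (F : C -> nat -> C) : (forall i, (i < k)%nat -> NZ (fun s => F s i)) -> NZ (fun s => Cprod k (F s)).
Proof.
  induction k; intro H.
  - exists 1. split. lra. intros. simpl. intro E. injection E. lra.
  - eapply NZ_ext. intro s. apply Cprod_S. apply NZ_mul. apply IHk; auto. apply H; auto.
Qed.

Lemma NZ_theta tau (f : C -> C) c k : 0 < snd tau -> k <> RtoC 0 -> (forall s, f s = c + k * s)%C ->
  NZ (fun s => theta tau (f s)).
Proof.
  intros Ht Hk E. destruct (theta_isolated tau c Ht) as [d [Hd H]].
  assert (Hk' : 0 < Cmod k) by (apply Cmod_gt_0; auto).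
  exists (d / Cmod k). split. apply Rdiv_lt_0_compat; auto.
  intros s [Hs1 Hs2]. rewrite E. apply H. rewrite Cmod_mult. split.
  apply Rmult_lt_0_compat; auto. apply Rlt_div_r in Hs2; auto. lra.
Qed.

Lemma RtoC_nz r : r <> 0 -> RtoC r <> RtoC 0.
Proof. intros H E. injection E. auto. Qed.
Lemma RtoC_neg1_nz : RtoC (-1) <> RtoC 0.
Proof. apply RtoC_nz. lra. Qed.
Lemma RtoC_1_nz : RtoC 1 <> RtoC 0.
Proof. apply RtoC_nz. lra. Qed.

Lemma h_nz_near tau x : 0 < snd tau ->
  exists d, 0 < d /\ forall y, 0 < Cmod (y - (x + eta))%C < d -> hfun tau x y <> RtoC 0.
Proof.
  intro Ht. set (y0 := (x + eta)%C).
  assert (NZ (fun s => hfun tau x (y0 + s)%C)).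
  { eapply NZ_ext. intro s. apply hfunE.
    apply NZ_mul; apply NZ_mul.
    - apply (NZ_theta tau _ (eta + (x - y0))%C (RtoC (-1))); auto. apply RtoC_neg1_nz. intro s; toC; ring.
    - apply (NZ_theta tau _ (eta + (x + y0))%C (RtoC 1)); auto. apply RtoC_1_nz. intro s; toC; ring.
    - apply (NZ_theta tau _ (eta - (x + y0))%C (RtoC (-1))); auto. apply RtoC_neg1_nz. intro s; toC; ring.
    - apply (NZ_theta tau _ (eta - x + y0)%C (RtoC 1)); auto. apply RtoC_1_nz. intro s; toC; ring. }
  destruct H as [d [Hd H]]. exists d. split; auto. intros y Hy.
  replace y with (y0 + (y - y0))%C by (toC; ring). apply H. auto.
Qed.


Definition Nl (y0 : C) : R -> C -> Prop := fun d y => 0 < Cmod (y - y0)%C < d.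
Lemma Nl_mono y0 : Nmono (Nl y0).
Proof. intros d1 d2 t H [H1 H2]. split; lra. Qed.
Lemma Cc_id y0 : Cc (Nl y0) (fun y => y) y0.
Proof. intros e He. exists e. split; auto. intros t [_ Ht]. auto. Qed.

Lemma Cc_theta_aff tau y0 (c k : C) : 0 < snd tau ->
  Cc (Nl y0) (fun y => theta tau (c + k * y)%C) (theta tau (c + k * y0)%C).
Proof.
  intro Ht. pose proof (Nl_mono y0) as HN. pose proof (Cc_id y0) as HI.
  apply (Cc_theta _ tau (fun y => c + k * y)%C _ Ht). apply (Cc_add _ HN (fun _ => c) (fun y => k * y)%C).
  apply Cc_const. apply (Cc_mul _ HN (fun _ => k) (fun y => y)). apply Cc_const. auto.
Qed.

Lemma Cc_mul2 y0 (f g : C -> C) L M : Cc (Nl y0) f L -> Cc (Nl y0) g M -> Cc (Nl y0) (fun y => f y * g y)%C (L * M)%C.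
Proof. apply Cc_mul. apply Nl_mono. Qed.

Lemma Cc_hfun_r tau y0 c : 0 < snd tau -> Cc (Nl y0) (fun y => hfun tau c y) (hfun tau c y0).
Proof.
  intro Ht. pose proof (Nl_mono y0) as HN.
  eapply (Cc_ext _ HN _ (fun y => (theta tau ((eta + c) + RtoC (-1) * y) * theta tau ((eta + c) + RtoC 1 * y)) *
      (theta tau ((eta - c) + RtoC (-1) * y) * theta tau ((eta - c) + RtoC 1 * y)))%C).
  - exists 1. split. lra. intros y _. rewrite hfunE. f_equal; f_equal; apply theta_arg; toC; ring.
  - replace (hfun tau c y0) with ((theta tau ((eta + c) + RtoC (-1) * y0) * theta tau ((eta + c) + RtoC 1 * y0)) *
      (theta tau ((eta - c) + RtoC (-1) * y0) * theta tau ((eta - c) + RtoC 1 * y0)))%C.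
    apply Cc_mul2; apply Cc_mul2; apply Cc_theta_aff; auto.
    rewrite hfunE. f_equal; f_equal; apply theta_arg; toC; ring.
Qed.

Lemma Cc_Qb tau n b y0 : 0 < snd tau ->
  Cc (Nl y0) (fun y => Cprod n (fun i => theta tau (b i - y) * theta tau (b i + y))%C)
             (Cprod n (fun i => theta tau (b i - y0) * theta tau (b i + y0))%C).
Proof.
  intro Ht. pose proof (Nl_mono y0) as HN.
  apply (Cc_Cprod _ HN n (fun y i => theta tau (b i - y) * theta tau (b i + y))%C). intros i _.
  eapply (Cc_ext _ HN _ (fun y => theta tau (b i + RtoC (-1) * y) * theta tau (b i + RtoC 1 * y))%C).
  - exists 1. split. lra. intros y _. f_equal; apply theta_arg; toC; ring.
  - replace (theta tau (b i - y0) * theta tau (b i + y0))%C with (theta tau (b i + RtoC (-1) * y0) * theta tau (b i + RtoC 1 * y0))%C.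
    apply Cc_mul2; apply Cc_theta_aff; auto.
    f_equal; apply theta_arg; toC; ring.
Qed.

Lemma alg2 (NF Qa Qb P DA DB Dt : C) : Qa <> RtoC 0 -> Qb <> RtoC 0 ->
  (NF * (Qa * Qb * P) * / (DA * Qa * (DB * Qb)) * Dt)%C = (P * (NF * / (DA * DB) * Dt))%C.
Proof.
  intros H1 H2. rewrite !Cinv_mul. generalize (/ DA)%C (/ DB)%C. intros iA iB. toC. field. auto.
Qed.

Lemma main_limit tau n a b x : 0 < snd tau ->
  DenF tau n a <> RtoC 0 -> DenF tau n b <> RtoC 0 ->
  Cprod n (fun i => theta tau (a i - x) * theta tau (a i + x))%C <> RtoC 0 ->
  Cprod n (fun i => theta tau (b i - (x + eta)) * theta tau (b i + (x + eta)))%C <> RtoC 0 ->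
  (forall i, (i < n)%nat -> hfun tau (a i) (x + eta)%C <> RtoC 0) ->
  Clim_at (fun y => Hfun tau (S n) (put_at n a x) (put_at n b y)) (Cadd x eta)
    (Cmul (Cprod n (fun i =>
             Cmul (Cmul (theta tau (Csub (Csub x eta) (a i)))
                        (theta tau (Cadd (Csub x eta) (a i))))
                  (Cmul (theta tau (Csub (Csub x eta) (b i)))
                        (theta tau (Cadd (Csub x eta) (b i))))))
          (Hfun tau n a b)).
Proof.
  intros Ht HDa HDb HQa HQb HHa.
  set (y0 := (x + eta)%C).
  pose proof (Nl_mono y0) as HN. pose proof (Cc_id y0) as HI.
  set (NF := NumF tau n a b). set (Dt := DetF tau n a b).
  set (Qa := Cprod n (fun i => theta tau (a i - x) * theta tau (a i + x))%C) in *.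
  set (Qb := fun y => Cprod n (fun i => theta tau (b i - y) * theta tau (b i + y))%C).
  set (Pa := fun y => Cprod n (fun i => hfun tau (a i) y)).
  set (Pb := Cprod n (fun j => hfun tau x (b j))).
  set (Dy := fun y => (DenF tau n a * Qa * (DenF tau n b * Qb y))%C).
  set (Ry := fun y => Cdet (S n) (upd n (Mu tau n a b x y))).
  set (F1 := fun y => (NF * Pa y * Pb * / Dy y * Dt)%C).
  set (F2 := fun y => (hfun tau x y * (NF * Pa y * Pb * / Dy y * Ry y))%C).
  assert (HD0 : Dy y0 <> RtoC 0).
  { unfold Dy. apply Cmul_nz. apply Cmul_nz; auto. apply Cmul_nz; auto. }
  assert (CPa : Cc (Nl y0) Pa (Pa y0)).
  { apply (Cc_Cprod _ HN n (fun y i => hfun tau (a i) y)). intros. apply Cc_hfun_r; auto. }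
  assert (CQb : Cc (Nl y0) Qb (Qb y0)) by (apply Cc_Qb; auto).
  assert (CDy : Cc (Nl y0) (fun y => / Dy y)%C (/ Dy y0)%C).
  { apply Cc_inv; auto. unfold Dy. apply Cc_mul; auto. apply Cc_const. apply Cc_mul; auto. apply Cc_const. }
  assert (CRy : Cc (Nl y0) Ry (Ry y0)).
  { apply (Cc_Cdet _ HN (S n) (fun y => upd n (Mu tau n a b x y))). intros i j Hi Hj.
    unfold upd, Mu. destruct (Nat.eq_dec j n) as [Ej|Ej].
    - subst j. rewrite Nat.eqb_refl, Bool.andb_true_r. destruct (Nat.eqb i n) eqn:Ei. apply Cc_const.
      apply Nat.eqb_neq in Ei. rewrite put_lt by lia.
      eapply Cc_ext; auto. exists 1. split. lra. intros. rewrite put_n. reflexivity.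
      rewrite put_n. cnorm. apply Cc_inv; auto. apply HHa. lia. apply Cc_hfun_r; auto.
    - replace (Nat.eqb j n) with false by (symmetry; apply Nat.eqb_neq; auto). rewrite Bool.andb_false_r.
      eapply Cc_ext; auto. exists 1. split. lra. intros. rewrite (put_lt n b t j) by lia. reflexivity.
      rewrite (put_lt n b y0 j) by lia. apply Cc_const. }
  assert (CF1 : Cc (Nl y0) F1 (F1 y0)).
  { unfold F1. repeat apply Cc_mul; auto; apply Cc_const. }
  assert (CF2 : Cc (Nl y0) F2 (F2 y0)).
  { unfold F2. apply Cc_mul; auto. apply Cc_hfun_r; auto. repeat apply Cc_mul; auto; apply Cc_const. }
  assert (E2 : F2 y0 = RtoC 0).
  { unfold F2. unfold y0. rewrite h_zero by auto. toC. ring. }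
  pose proof (Cc_add _ HN _ _ _ _ CF1 CF2) as CF. rewrite E2 in CF.
  replace (F1 y0 + RtoC 0)%C with (F1 y0) in CF by (toC; ring).
  assert (EL : F1 y0 = Cmul (Cprod n (fun i =>
             Cmul (Cmul (theta tau (Csub (Csub x eta) (a i))) (theta tau (Cadd (Csub x eta) (a i))))
                  (Cmul (theta tau (Csub (Csub x eta) (b i))) (theta tau (Cadd (Csub x eta) (b i))))))
          (Hfun tau n a b)).
  { set (X := fun i => ((theta tau (x - eta - a i) * theta tau (x - eta + a i)) *
                         (theta tau (x - eta - b i) * theta tau (x - eta + b i)))%C).
    assert (EP : (Pa y0 * Pb)%C = (Qa * Qb y0 * Cprod n X)%C).
    { unfold Pa, Pb, Qb, Qa. rewrite <- Cprod_mul.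
      rewrite (Cprod_ext n _ (fun i => ((theta tau (a i - x) * theta tau (a i + x)) *
                 (theta tau (b i - y0) * theta tau (b i + y0))) * X i)%C).
      rewrite !Cprod_mul. reflexivity.
      intros i _. unfold y0. rewrite h_ay0, h_xb by auto. unfold X. toC. ring. }
    unfold F1. 
    replace (NF * Pa y0 * Pb * / Dy y0 * Dt)%C with (NF * (Pa y0 * Pb) * / Dy y0 * Dt)%C by (toC; ring).
    rewrite EP. unfold Dy. rewrite alg2 by auto. rewrite Hfun_eq. reflexivity. }
  rewrite <- EL.
  destruct (h_nz_near tau x Ht) as [d0 [Hd0 Hh]].
  apply (Cc_ext _ HN _ (fun y => F1 y + F2 y)%C). 
  - exists d0. split; auto. intros y Hy. specialize (Hh y Hy).
    rewrite Hfun_eq, NumF_split, DenF_split, DenF_split, DetF_split.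
    unfold F1, F2, Dy, Qb, Pa, Pb, Ry, NF, Dt, Qa.
    cnorm. apply alg1. auto.
  - auto.
Qed.


Definition QaF tau n (a : nat -> C) (x : C) : C := Cprod n (fun i => theta tau (a i - x) * theta tau (a i + x))%C.
Definition HaF tau n (a : nat -> C) (x : C) : C := Cprod n (fun i => hfun tau (a i) (x + eta)%C).
Definition EF tau n (a b : nat -> C) (x : C) : C :=
  (DenF tau n a * DenF tau n b * QaF tau n a x * QaF tau n b (x + eta)%C * HaF tau n a x)%C.

Definition Np n (a b : nat -> C) (x : C) : R -> ((nat -> C) * (nat -> C) * C) -> Prop :=
  fun d p => near n d a b x (fst (fst p)) (snd (fst p)) (snd p).
Lemma Np_mono n a b x : Nmono (Np n a b x).
Proof. intros d1 d2 p H [H1 H2]. split. lra. intros i Hi. destruct (H2 i Hi). split; lra. Qed.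

Lemma Cc_EF tau n a b x : 0 < snd tau ->
  Cc (Np n a b x) (fun p => EF tau n (fst (fst p)) (snd (fst p)) (snd p)) (EF tau n a b x).
Proof.
  intro Ht. pose proof (Np_mono n a b x) as HN.
  assert (CA : forall i, (i < n)%nat -> Cc (Np n a b x) (fun p => fst (fst p) i) (a i)).
  { intros i Hi e He. exists e. split; auto. intros p [_ H]. apply H; auto. }
  assert (CB : forall i, (i < n)%nat -> Cc (Np n a b x) (fun p => snd (fst p) i) (b i)).
  { intros i Hi e He. exists e. split; auto. intros p [_ H]. apply H; auto. }
  assert (CX : Cc (Np n a b x) (fun p => snd p) x).
  { intros e He. exists e. split; auto. intros p [H _]. apply H. }
  assert (CXe : Cc (Np n a b x) (fun p => snd p + eta)%C (x + eta)%C).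
  { apply (Cc_add _ HN (fun p => snd p) (fun _ => eta)); auto. apply Cc_const. }
  assert (CD : forall (g : _ -> nat -> C) (c : nat -> C), (forall i, (i < n)%nat -> Cc (Np n a b x) (fun p => g p i) (c i)) ->
     Cc (Np n a b x) (fun p => DenF tau n (g p)) (DenF tau n c)).
  { intros g c Hg. unfold DenF.
    apply (Cc_Cprod _ HN n (fun p j => Cprod j (fun i => theta tau (g p i - g p j) * theta tau (g p i + g p j))%C)).
    intros j Hj.
    apply (Cc_Cprod _ HN j (fun p i => theta tau (g p i - g p j) * theta tau (g p i + g p j))%C).
    intros i Hi.
    apply (Cc_mul _ HN (fun p => theta tau (g p i - g p j)%C) (fun p => theta tau (g p i + g p j)%C)).
    apply (Cc_theta _ tau (fun p => g p i - g p j)%C _ Ht). apply (Cc_sub _ HN (fun p => g p i) (fun p => g p j)); apply Hg; lia.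
    apply (Cc_theta _ tau (fun p => g p i + g p j)%C _ Ht). apply (Cc_add _ HN (fun p => g p i) (fun p => g p j)); apply Hg; lia. }
  assert (CQ : forall (g : _ -> nat -> C) (c : nat -> C) (h : _ -> C) (hc : C),
     (forall i, (i < n)%nat -> Cc (Np n a b x) (fun p => g p i) (c i)) -> Cc (Np n a b x) h hc ->
     Cc (Np n a b x) (fun p => QaF tau n (g p) (h p)) (QaF tau n c hc)).
  { intros g c h hc Hg Hh. unfold QaF.
    apply (Cc_Cprod _ HN n (fun p i => theta tau (g p i - h p) * theta tau (g p i + h p))%C). intros i Hi.
    apply (Cc_mul _ HN (fun p => theta tau (g p i - h p)%C) (fun p => theta tau (g p i + h p)%C)).
    apply (Cc_theta _ tau (fun p => g p i - h p)%C _ Ht). apply (Cc_sub _ HN (fun p => g p i) h); auto.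
    apply (Cc_theta _ tau (fun p => g p i + h p)%C _ Ht). apply (Cc_add _ HN (fun p => g p i) h); auto. }
  assert (CH : Cc (Np n a b x) (fun p => HaF tau n (fst (fst p)) (snd p)) (HaF tau n a x)).
  { unfold HaF. apply (Cc_Cprod _ HN n (fun p i => hfun tau (fst (fst p) i) (snd p + eta)%C)). intros i Hi.
    eapply (Cc_ext _ HN _ (fun p => (theta tau (eta + (fst (fst p) i - (snd p + eta))) * theta tau (eta + (fst (fst p) i + (snd p + eta)))) *
          (theta tau (eta - (fst (fst p) i + (snd p + eta))) * theta tau (eta - fst (fst p) i + (snd p + eta))))%C).
    exists 1. split. lra. intros. apply hfunE. rewrite hfunE.
    pose proof (CA i Hi) as Ca.
    apply (Cc_mul _ HN (fun p => theta tau (eta + (fst (fst p) i - (snd p + eta))) * theta tau (eta + (fst (fst p) i + (snd p + eta))))%C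
                       (fun p => theta tau (eta - (fst (fst p) i + (snd p + eta))) * theta tau (eta - fst (fst p) i + (snd p + eta)))%C).
    - apply (Cc_mul _ HN (fun p => theta tau (eta + (fst (fst p) i - (snd p + eta)))%C) (fun p => theta tau (eta + (fst (fst p) i + (snd p + eta)))%C)).
      + apply (Cc_theta _ tau (fun p => eta + (fst (fst p) i - (snd p + eta)))%C _ Ht).
        apply (Cc_add _ HN (fun _ => eta) (fun p => fst (fst p) i - (snd p + eta))%C). apply Cc_const.
        apply (Cc_sub _ HN (fun p => fst (fst p) i) (fun p => snd p + eta)%C); auto.
      + apply (Cc_theta _ tau (fun p => eta + (fst (fst p) i + (snd p + eta)))%C _ Ht).
        apply (Cc_add _ HN (fun _ => eta) (fun p => fst (fst p) i + (snd p + eta))%C). apply Cc_const.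
        apply (Cc_add _ HN (fun p => fst (fst p) i) (fun p => snd p + eta)%C); auto.
    - apply (Cc_mul _ HN (fun p => theta tau (eta - (fst (fst p) i + (snd p + eta)))%C) (fun p => theta tau (eta - fst (fst p) i + (snd p + eta))%C)).
      + apply (Cc_theta _ tau (fun p => eta - (fst (fst p) i + (snd p + eta)))%C _ Ht).
        apply (Cc_sub _ HN (fun _ => eta) (fun p => fst (fst p) i + (snd p + eta))%C). apply Cc_const.
        apply (Cc_add _ HN (fun p => fst (fst p) i) (fun p => snd p + eta)%C); auto.
      + apply (Cc_theta _ tau (fun p => eta - fst (fst p) i + (snd p + eta))%C _ Ht).
        apply (Cc_add _ HN (fun p => eta - fst (fst p) i)%C (fun p => snd p + eta)%C); auto.
        apply (Cc_sub _ HN (fun _ => eta) (fun p => fst (fst p) i)); auto. apply Cc_const. }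
  unfold EF.
  apply (Cc_mul _ HN (fun p => DenF tau n (fst (fst p)) * DenF tau n (snd (fst p)) * QaF tau n (fst (fst p)) (snd p) * QaF tau n (snd (fst p)) (snd p + eta))%C (fun p => HaF tau n (fst (fst p)) (snd p))); auto.
  apply (Cc_mul _ HN (fun p => DenF tau n (fst (fst p)) * DenF tau n (snd (fst p)) * QaF tau n (fst (fst p)) (snd p))%C (fun p => QaF tau n (snd (fst p)) (snd p + eta)%C)).
  apply (Cc_mul _ HN (fun p => DenF tau n (fst (fst p)) * DenF tau n (snd (fst p)))%C (fun p => QaF tau n (fst (fst p)) (snd p))).
  apply (Cc_mul _ HN (fun p => DenF tau n (fst (fst p))) (fun p => DenF tau n (snd (fst p)))).
  apply CD; auto. apply CD; auto. apply CQ; auto. apply CQ; auto.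
Qed.

Lemma EF_open tau n a b x : 0 < snd tau -> EF tau n a b x <> RtoC 0 ->
  exists r, 0 < r /\ forall a' b' x', near n r a b x a' b' x' -> EF tau n a' b' x' <> RtoC 0.
Proof.
  intros Ht HE. assert (He : 0 < Cmod (EF tau n a b x)) by (apply Cmod_gt_0; auto).
  destruct (Cc_EF tau n a b x Ht _ He) as [d [Hd H]]. exists d. split; auto.
  intros a' b' x' Hn E. specialize (H ((a', b'), x') Hn). simpl in H. rewrite E in H.
  replace (RtoC 0 - EF tau n a b x)%C with (- EF tau n a b x)%C in H by (toC; ring). rewrite Cmod_opp in H. lra.
Qed.


Definition al (i : nat) : C := RtoC (INR i + 2).

Lemma RtoC_sub r1 r2 : (RtoC r1 - RtoC r2)%C = RtoC (r1 - r2).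
Proof. unfold RtoC, Cminus, Cplus, Copp; simpl. f_equal; ring. Qed.
Lemma RtoC_add r1 r2 : (RtoC r1 + RtoC r2)%C = RtoC (r1 + r2).
Proof. unfold RtoC, Cplus; simpl. f_equal; ring. Qed.
Lemma RtoC_opp r1 : (- RtoC r1)%C = RtoC (- r1).
Proof. unfold RtoC, Copp; simpl. f_equal; ring. Qed.

Lemma al_sub_nz i j : i <> j -> (al i - al j)%C <> RtoC 0.
Proof. intro H. unfold al. rewrite RtoC_sub. apply RtoC_nz. intro E. apply H. apply INR_eq. lra. Qed.
Lemma al_add_nz i j : (al i + al j)%C <> RtoC 0.
Proof. unfold al. rewrite RtoC_add. apply RtoC_nz. pose proof (pos_INR i). pose proof (pos_INR j). lra. Qed.
Lemma al_m1_nz i : (al i - RtoC 1)%C <> RtoC 0.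
Proof. unfold al. rewrite RtoC_sub. apply RtoC_nz. pose proof (pos_INR i). lra. Qed.
Lemma al_p1_nz i : (al i + RtoC 1)%C <> RtoC 0.
Proof. unfold al. rewrite RtoC_add. apply RtoC_nz. pose proof (pos_INR i). lra. Qed.
Lemma al_n1_nz i : (- (al i + RtoC 1))%C <> RtoC 0.
Proof. unfold al. rewrite RtoC_add, RtoC_opp. apply RtoC_nz. pose proof (pos_INR i). lra. Qed.
Lemma al_1m_nz i : (RtoC 1 - al i)%C <> RtoC 0.
Proof. unfold al. rewrite RtoC_sub. apply RtoC_nz. pose proof (pos_INR i). lra. Qed.

Lemma NZ_Den tau n (c : nat -> C) : 0 < snd tau -> NZ (fun s => DenF tau n (fun i => c i + s * al i)%C).
Proof.
  intro Ht. unfold DenF. apply NZ_Cprod. intros j Hj. apply NZ_Cprod. intros i Hi. apply NZ_mul.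
  - apply (NZ_theta tau _ (c i - c j)%C (al i - al j)%C Ht). apply al_sub_nz. lia. intro s. toC. ring.
  - apply (NZ_theta tau _ (c i + c j)%C (al i + al j)%C Ht). apply al_add_nz. intro s. toC. ring.
Qed.

Lemma NZ_Qa tau n (c : nat -> C) (z : C) (zf : C -> C) : 0 < snd tau -> (forall s, zf s = z + s)%C ->
  NZ (fun s => QaF tau n (fun i => c i + s * al i)%C (zf s)).
Proof.
  intros Ht Hz. unfold QaF. apply NZ_Cprod. intros i Hi. apply NZ_mul.
  - apply (NZ_theta tau _ (c i - z)%C (al i - RtoC 1)%C Ht). apply al_m1_nz. intro s. rewrite Hz. toC. ring.
  - apply (NZ_theta tau _ (c i + z)%C (al i + RtoC 1)%C Ht). apply al_p1_nz. intro s. rewrite Hz. toC. ring.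
Qed.

Lemma NZ_Ha tau n (c : nat -> C) (x : C) : 0 < snd tau ->
  NZ (fun s => HaF tau n (fun i => c i + s * al i)%C (x + s)%C).
Proof.
  intros Ht. unfold HaF. apply NZ_Cprod. intros i Hi.
  eapply NZ_ext. intro s. apply hfunE.
  apply NZ_mul; apply NZ_mul.
  - apply (NZ_theta tau _ (eta + (c i - (x + eta)))%C (al i - RtoC 1)%C Ht). apply al_m1_nz. intro s. toC. ring.
  - apply (NZ_theta tau _ (eta + (c i + (x + eta)))%C (al i + RtoC 1)%C Ht). apply al_p1_nz. intro s. toC. ring.
  - apply (NZ_theta tau _ (eta - (c i + (x + eta)))%C (- (al i + RtoC 1))%C Ht). apply al_n1_nz. intro s. toC. ring.
  - apply (NZ_theta tau _ (eta - c i + (x + eta))%C (RtoC 1 - al i)%C Ht). apply al_1m_nz. intro s. toC. ring.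
Qed.

Lemma EF_dense tau n a b x r : 0 < snd tau -> 0 < r ->
  exists a' b' x', near n r a b x a' b' x' /\ EF tau n a' b' x' <> RtoC 0.
Proof.
  intros Ht Hr.
  assert (HNZ : NZ (fun s => EF tau n (fun i => a i + s * al i)%C (fun i => b i + s * al i)%C (x + s)%C)).
  { unfold EF. apply NZ_mul. apply NZ_mul. apply NZ_mul. apply NZ_mul.
    - apply NZ_Den; auto.
    - apply NZ_Den; auto.
    - apply (NZ_Qa tau n a x); auto.
    - apply (NZ_Qa tau n b (x + eta)%C); auto. intro s. toC. ring.
    - apply NZ_Ha; auto. }
  destruct HNZ as [d [Hd H]].
  assert (Hn3 : 0 < INR n + 3) by (pose proof (pos_INR n); lra).
  set (t := Rmin (d / 2) (r / (INR n + 3))).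
  assert (Ht0 : 0 < t) by (apply Rmin_pos; apply Rdiv_lt_0_compat; lra).
  assert (Htd : t < d) by (pose proof (Rmin_l (d/2) (r / (INR n + 3))); unfold t; lra).
  assert (Htr : t * (INR n + 3) <= r).
  { pose proof (Rmin_r (d/2) (r / (INR n + 3))). fold t in H0. apply Rle_div_r in H0; auto. }
  assert (HCt : Cmod (RtoC t) = t) by (rewrite Cmod_R, Rabs_right; lra).
  exists (fun i => a i + RtoC t * al i)%C, (fun i => b i + RtoC t * al i)%C, (x + RtoC t)%C.
  split.
  - split.
    + change (Cmod (x + RtoC t - x)%C < r). replace (x + RtoC t - x)%C with (RtoC t) by (toC; ring).
      rewrite HCt. pose proof (pos_INR n). nra.
    + intros i Hi.
      assert (E : Cmod (RtoC t * al i)%C = t * (INR i + 2)).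
      { unfold al. rewrite Cmod_mult, HCt, Cmod_R, Rabs_right; auto. pose proof (pos_INR i); lra. }
      assert (Hi' : INR i + 2 < INR n + 3) by (apply lt_INR in Hi; lra).
      assert (t * (INR i + 2) < r) by nra.
      split.
      * change (Cmod (a i + RtoC t * al i - a i)%C < r). replace (a i + RtoC t * al i - a i)%C with (RtoC t * al i)%C by (toC; ring). lra.
      * change (Cmod (b i + RtoC t * al i - b i)%C < r). replace (b i + RtoC t * al i - b i)%C with (RtoC t * al i)%C by (toC; ring). lra.
  - apply H. rewrite HCt. lra.
Qed.


Theorem mainTheorem3 (tau : Cx) (Htau : 0 < Cim tau) (m : nat) (Hm : (2 <= m)%nat) :
  exists G : (nat -> Cx) -> (nat -> Cx) -> Cx -> Prop,
    open_dense (m - 1) G /\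
    forall (a b : nat -> Cx) (x : Cx), G a b x ->
      Clim_at
        (fun y => Hfun tau m (put_at (m - 1) a x) (put_at (m - 1) b y))
        (Cadd x eta)
        (Cmul
          (Cprod (m - 1) (fun i =>
             Cmul (Cmul (theta tau (Csub (Csub x eta) (a i)))
                        (theta tau (Cadd (Csub x eta) (a i))))
                  (Cmul (theta tau (Csub (Csub x eta) (b i)))
                        (theta tau (Cadd (Csub x eta) (b i))))))
          (Hfun tau (m - 1) a b)).
Proof.
  unfold Cim in Htau.
  exists (fun a b x => EF tau (m - 1) a b x <> RtoC 0). split.
  - split.
    + intros a b x HG. apply EF_open; auto.
    + intros a b x r Hr. apply EF_dense; auto.
  - intros a b x HG. destruct m as [|n]. lia.
    replace (S n - 1)%nat with n in * by lia.
    unfold EF in HG.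
    pose proof (Cmul_nz_l _ _ HG) as H1. pose proof (Cmul_nz_r _ _ HG) as HHa.
    pose proof (Cmul_nz_l _ _ H1) as H2. pose proof (Cmul_nz_r _ _ H1) as HQb.
    pose proof (Cmul_nz_l _ _ H2) as H3. pose proof (Cmul_nz_r _ _ H2) as HQa.
    pose proof (Cmul_nz_l _ _ H3) as HDa. pose proof (Cmul_nz_r _ _ H3) as HDb.
    apply main_limit; auto.
    intros i Hi. apply (Cprod_nz_inv n (fun i => hfun tau (a i) (x + eta)%C) i HHa Hi).
Qed.
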